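(* Let $B'\in\mathcal X^+_{N-2}$ and $B\in{}'\mathcal X^{0,+}_{N-2}$ with $B'\preceq B$. Then $B'\in{}'\mathcal X^{0,+}_{N-2}$.
   Context: Let $N\ge 3$ be an odd integer and $F=\mathbb Z/2\mathbb Z$. For integers $i,j$ let $[i,j]=\{h\in\mathbb Z: i\le h\le j\}$ (empty if $i>j$). Let $S_N=[1,N]$. The set of all subsets of $S_N$ is an $F$-vector space with sum $X+X'=(X\cup X')-(X\cap X')$; let $E_N$ be the subspace of subsets of even cardinality. A $2$-element subset $\{i,j\}\subseteq S_N$ is written $ij$ when either ($i<j$ and $j-i$ odd) or ($i>j$ and $i-j$ even); each $2$-element subset has exactly one such writing. Let $\mathcal P_N$ be the set of all finite sets $B$ of pairwise disjoint $2$-element subsets of $S_N$; for $B\in\mathcal P_N$ let $\langle B\rangle$ be the $F$-subspace of $E_N$ spanned by the elements of $B$, $\mathrm{supp}(B)=\bigcup_{X\in B}X$, $B^0=\{\{i,j\}\in B: i-j\text{ even}\}$, $B^1=\{\{i,j\}\in B: i-j\text{ odd}\}$. A set $X\subseteq S_N$ is $0$-covered (resp. $1$-covered) by $B^1$ if there are $a_1b_1,\dots,a_sb_s\in B^1$ ($s\ge 0$, so $a_r<b_r$) with $X=[a_1,b_1]\sqcup\dots\sqcup[a_s,b_s]$ (resp. $X=[a_1,b_1]\sqcup\dots\sqcup[a_s,b_s]\sqcup\{u\}$ for some $u$), disjoint unions. Let ${}^*\mathcal P_N$ be the set of $B\in\mathcal P_N$ such that: for every $ij\in B^1$ the set $[i+1,j-1]$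 is $0$-covered by $B^1$; and there is a sequence $i_*(B)=(i_1,\dots,i_{2s})$ in $S_N$ with $B^0=\{i_{2s}i_1,i_{2s-1}i_2,\dots,i_{s+1}i_s\}$ (so $s=|B^0|$; the sequence is unique) such that, if $s\ge1$, each of $[i_1+1,i_2-1],\dots,[i_{s-1}+1,i_s-1],[i_{s+1}+1,i_{s+2}-1],\dots,[i_{2s-1}+1,i_{2s}-1]$ is $0$-covered by $B^1$. For $B\in{}^*\mathcal P_N$ with $i_*(B)=(i_1,\dots,i_{2s})$ consider: (I) $s=0$, or $s\ge1$ and $[1,i_1-1]$ and $[i_{2s}+1,N]$ are $0$-covered by $B^1$; (II) $N\notin\mathrm{supp}(B)$ and either $s=0$, or $s$ is odd and either (i) $[1,i_1-1]$ is $1$-covered and $[i_{2s}+1,N-1]$ is $0$-covered by $B^1$, or (ii) $[1,i_1-1]$ is $0$-covered and $[i_{2s}+1,N-1]$ is $1$-covered by $B^1$; (III) (I) holds and, if $s$ is even then $\{i,N\}\in B$ for some even $i$, if $s$ is odd then $\{i,N\}\in B$ for some odd $i$. Let $\mathcal X^+_{N-2}$, $\mathcal X^-_{N-2}$ be the sets of $B\in{}^*\mathcal P_N$ satisfying (II), (III) respectively, and $\mathcal X_{N-2}=\mathcal X^+_{N-2}\sqcup\mathcal X^-_{N-2}$. For $B\in\mathcal X^+_{N-2}$ with $s\ge1$ there is a unique $u_B$: in case (i), $u_B\in[1,i_1-1]$ with $[1,u_B-1]$, $[u_B+1,i_1-1]$ $0$-covered by $B^1$ ($u_B$ odd); in case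 (ii), $u_B\in[i_{2s}+1,N-1]$ with $[i_{2s}+1,u_B-1]$, $[u_B+1,N-1]$ $0$-covered by $B^1$ ($u_B$ even). Let ${}'\mathcal X^{0,+}_{N-2}=\{B\in\mathcal X^+_{N-2}:|B^0|=0,\ N-1\notin\mathrm{supp}(B)\}$. Put $[[ij]]=[i,j]$ if $i<j$ and $[[ij]]=[i,N]\cup[1,j]$ if $i>j$. For $B\in\mathcal X_{N-2}$ define ${}'\epsilon(B)\in E_N$: ${}'\epsilon(B)=\sum_{ij\in B}[[ij]]$ if $B\in\mathcal X^-_{N-2}$ or if $B\in\mathcal X^+_{N-2}$ with $|B^0|=0$; ${}'\epsilon(B)=\sum_{ij\in B}[[ij]]+[u_B,N]$ if $B\in\mathcal X^+_{N-2}$, $|B^0|$ odd, $u_B$ even; ${}'\epsilon(B)=\sum_{ij\in B}[[ij]]+\{N\}+[1,u_B]$ if $B\in\mathcal X^+_{N-2}$, $|B^0|$ odd, $u_B$ odd. For $B,B'\in\mathcal X_{N-2}$ write $B'\preceq B$ if there is a sequence $B'=B_0,\dots,B_h=B$ ($h\ge0$) in $\mathcal X_{N-2}$ with ${}'\epsilon(B_k)\in\langle B_{k+1}\rangle$ for $k=0,\dots,h-1$. *)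

(* Defs.v *)
(* Subsets of S_N = [1,N] are sets of 'I_N.+1 avoiding 0. *)
From mathcomp Require Import all_boot all_order.
Set Implicit Arguments. Unset Strict Implicit. Unset Printing Implicit Defensive.

Section Defs.
Variable N : nat.
Local Notation T := 'I_N.+1.

Definition itv (a b : nat) : {set T} := [set h : T | (1 <= h) && (a <= h <= b)].

(* sum in the F_2-vector space of subsets: the element h belongs to the sum
   of the family g X (X in C) iff it lies in an odd number of them *)
Definition sumSD (C : {set {set T}}) (g : {set T} -> {set T}) : {set T} :=
  [set h : T | odd #|[set X in C | h \in g X]|].
Definition setSD (A A' : {set T}) : {set T} := (A :\: A') :|: (A' :\: A).

Definition inSpan (B : {set {set T}}) (Y : {set T}) : Prop :=
  exists C : {set {set T}}, C \subset B /\ Y = sumSD C id.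

Definition PN (B : {set {set T}}) : Prop :=
  (forall X, X \in B -> #|X| = 2 /\ ord0 \notin X) /\
  (forall X Y, X \in B -> Y \in B -> X != Y -> [disjoint X & Y]).

Definition writ (i j : T) : bool :=
  ((i < j) && odd (j - i)) || ((j < i) && ~~ odd (i - j)).

Definition B0 (B : {set {set T}}) : {set {set T}} :=
  [set X in B | [exists i : T, exists j : T,
     [&& X == [set i; j], j < i & ~~ odd (i - j)]]].
Definition B1 (B : {set {set T}}) : {set {set T}} :=
  [set X in B | [exists i : T, exists j : T,
     [&& X == [set i; j], i < j & odd (j - i)]]].

Definition supp (B : {set {set T}}) : {set T} := \bigcup_(X in B) X.
Definition inSupp (B : {set {set T}}) (n : nat) : bool :=
  [exists h in supp B, val h == n].

Definition hull (X : {set T}) : {set T} :=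
  [set h : T | [exists a in X, exists b in X, (a <= h <= b)]].

Definition cov0 (B : {set {set T}}) (Y : {set T}) : Prop :=
  exists C : {set {set T}}, C \subset B1 B /\
    (forall X1 X2, X1 \in C -> X2 \in C -> X1 != X2 ->
        [disjoint hull X1 & hull X2]) /\
    Y = \bigcup_(X in C) hull X.
Definition cov1 (B : {set {set T}}) (Y : {set T}) : Prop :=
  exists u : T, u \in Y /\ cov0 B (Y :\ u).

Definition seqP (B : {set {set T}}) (f : nat -> T) (s : nat) : Prop :=
  #|B0 B| = s /\
  (forall k, 1 <= k <= 2 * s -> 0 < f k) /\
  (forall k, 1 <= k <= s ->
     f k < f (2 * s + 1 - k) /\ ~~ odd (f (2 * s + 1 - k) - f k)) /\
  (forall X, X \in B0 B <->
     exists k, 1 <= k <= s /\ X = [set f (2 * s + 1 - k); f k]) /\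
  (forall k, 1 <= k < s -> cov0 B (itv (f k).+1 (f k.+1).-1)) /\
  (forall k, s + 1 <= k < 2 * s -> cov0 B (itv (f k).+1 (f k.+1).-1)).

Definition starBase (B : {set {set T}}) : Prop :=
  PN B /\
  (forall i j : T, [set i; j] \in B1 B -> i < j -> cov0 B (itv i.+1 j.-1)).

Definition condI (B : {set {set T}}) (f : nat -> T) (s : nat) : Prop :=
  s = 0 \/ (1 <= s /\ cov0 B (itv 1 (f 1).-1) /\ cov0 B (itv (f (2 * s)).+1 N)).

Definition caseI (B : {set {set T}}) (f : nat -> T) (s : nat) : Prop :=
  cov1 B (itv 1 (f 1).-1) /\ cov0 B (itv (f (2 * s)).+1 N.-1).
Definition caseII (B : {set {set T}}) (f : nat -> T) (s : nat) : Prop :=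
  cov0 B (itv 1 (f 1).-1) /\ cov1 B (itv (f (2 * s)).+1 N.-1).

Definition condII (B : {set {set T}}) (f : nat -> T) (s : nat) : Prop :=
  ~~ inSupp B N /\
  (s = 0 \/ (odd s /\ (caseI B f s \/ caseII B f s))).

Definition condIII (B : {set {set T}}) (f : nat -> T) (s : nat) : Prop :=
  condI B f s /\
  (~~ odd s -> exists i : T, ~~ odd i /\ [set i; ord_max] \in B) /\
  (odd s -> exists i : T, odd i /\ [set i; ord_max] \in B).

Definition Xplus (B : {set {set T}}) : Prop :=
  starBase B /\ exists f s, seqP B f s /\ condII B f s.
Definition Xminus (B : {set {set T}}) : Prop :=
  starBase B /\ exists f s, seqP B f s /\ condIII B f s.
Definition inX (B : {set {set T}}) : Prop := Xplus B \/ Xminus B.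
Definition X0plus' (B : {set {set T}}) : Prop :=
  Xplus B /\ #|B0 B| = 0 /\ ~~ inSupp B N.-1.

Definition uB (B : {set {set T}}) (u : nat) : Prop :=
  exists f s, seqP B f s /\ condII B f s /\ 1 <= s /\
   ((caseI B f s /\ 1 <= u <= (f 1).-1 /\
       cov0 B (itv 1 u.-1) /\ cov0 B (itv u.+1 (f 1).-1)) \/
    (caseII B f s /\ (f (2 * s)).+1 <= u <= N.-1 /\
       cov0 B (itv (f (2 * s)).+1 u.-1) /\ cov0 B (itv u.+1 N.-1))).

Definition ditv (i j : T) : {set T} :=
  if i < j then itv i j else itv i N :|: itv 1 j.
Definition wrset (X : {set T}) : {set T} :=
  [set h : T | [exists i : T, exists j : T,
     [&& X == [set i; j], writ i j & h \in ditv i j]]].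
Definition sumW (B : {set {set T}}) : {set T} := sumSD B wrset.

Definition epsP (B : {set {set T}}) (Y : {set T}) : Prop :=
  ((Xminus B \/ (Xplus B /\ #|B0 B| = 0)) /\ Y = sumW B) \/
  (Xplus B /\ odd #|B0 B| /\ exists u, uB B u /\
     (~~ odd u -> Y = setSD (sumW B) (itv u N)) /\
     (odd u -> Y = setSD (sumW B) (setSD [set ord_max] (itv 1 u)))).

Inductive preceq : {set {set T}} -> {set {set T}} -> Prop :=
| preceq_refl B : inX B -> preceq B B
| preceq_step B0' B1' B : inX B0' -> inX B1' ->
    (exists Y, epsP B0' Y /\ inSpan B1' Y) -> preceq B1' B -> preceq B0' B.

End Defs.

(* Main.v *)
Require Import Defs.
From mathcomp Require Import all_boot all_order.
From mathcomp Require Import zify.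
Set Implicit Arguments. Unset Strict Implicit. Unset Printing Implicit Defensive.

Section Basic.
Variable N : nat.
Local Notation T := 'I_N.+1.

Lemma pairP (X : {set T}) : #|X| = 2 -> ord0 \notin X ->
  exists i j : T, [/\ 0 < i, i < j & X = [set i; j]].
Proof.
move/eqP/cards2P=> [a [b [ab ->]]] H0.
have a0 : 0 < a.
  rewrite lt0n; apply/negP=> /eqP a0; move: H0; rewrite !inE.
  by have -> : a = ord0 by apply/val_inj.
have b0 : 0 < b.
  rewrite lt0n; apply/negP=> /eqP b0; move: H0; rewrite !inE.
  have -> : b = ord0 by apply/val_inj.
  by rewrite eqxx orbT.
case: (ltngtP a b) => [lt|gt|eq].
- by exists a, b.
- exists b, a; split=> //. by rewrite setUC.
- have E : a = b by apply/val_inj. by rewrite E eqxx in ab.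
Qed.

Lemma set2_inj (i j i' j' : T) : [set i; j] = [set i'; j'] -> i < j -> i' < j' ->
  i = i' /\ j = j'.
Proof.
move=> E lt lt'.
have hi : i \in [set i'; j'] by rewrite -E !inE eqxx.
have hj : j \in [set i'; j'] by rewrite -E !inE eqxx orbT.
have hi' : i' \in [set i; j] by rewrite E !inE eqxx.
have hj' : j' \in [set i; j] by rewrite E !inE eqxx orbT.
move: hi hj hi' hj'; rewrite !inE.
move=> /orP[/eqP a|/eqP a] /orP[/eqP b|/eqP b] /orP[/eqP c|/eqP c] /orP[/eqP d|/eqP d];
  subst; try by split.
all: try (move: lt lt'; lia).
Qed.


Lemma set2_cases (i j i' j' : T) : [set i; j] = [set i'; j'] -> i < j ->
  (i' = i /\ j' = j) \/ (i' = j /\ j' = i).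
Proof.
move=> E lt.
case: (ltngtP i' j') => [lt'|gt'|eq'].
- by have [-> ->] := set2_inj E lt lt'; left.
- have E2 : [set i; j] = [set j'; i'] by rewrite E setUC.
  have [-> ->] := set2_inj E2 lt gt'; by right.
- have E' : i' = j' by apply/val_inj.
  move: (congr1 (fun A : {set T} => #|A|) E); rewrite E' setUid cards1 cards2.
  by case: eqP => // ij; move: lt; rewrite ij ltnn.
Qed.

Lemma inB1 (B : {set {set T}}) (i j : T) : i < j ->
  ([set i; j] \in B1 B) = ([set i; j] \in B) && odd (j - i).
Proof.
move=> lt; rewrite inE; case: ([set i; j] \in B) => //=.
apply/existsP/idP.
- move=> [i' /existsP [j' /and3P [/eqP E lt' od]]].
  have [-> ->] := set2_inj E lt lt'; exact: od.
- move=> od; exists i; apply/existsP; exists j; by rewrite eqxx lt od.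
Qed.

Lemma inB0 (B : {set {set T}}) (i j : T) : i < j ->
  ([set i; j] \in B0 B) = ([set i; j] \in B) && ~~ odd (j - i).
Proof.
move=> lt; rewrite inE; case: ([set i; j] \in B) => //=.
apply/existsP/idP.
- move=> [i' /existsP [j' /and3P [/eqP E lt' od]]].
  have E2 : [set i; j] = [set j'; i'] by rewrite E setUC.
  have [-> ->] := set2_inj E2 lt lt'; exact: od.
- move=> od; exists j; apply/existsP; exists i; by rewrite setUC eqxx lt od.
Qed.

Lemma hull2 (i j h : T) : i <= j -> (h \in hull [set i; j]) = (i <= h <= j).
Proof.
move=> le; rewrite inE; apply/existsP/idP.
- move=> [a /andP [ha /existsP [b /andP [hb /andP [h1 h2]]]]].
  move: ha hb h1 h2; rewrite !inE => /orP [/eqP ea|/eqP ea] /orP [/eqP eb|/eqP eb];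
    subst; lia.
- move=> /andP [h1 h2]; exists i; rewrite !inE eqxx /=; apply/existsP; exists j.
  by rewrite !inE eqxx orbT h1 h2.
Qed.

Lemma in_itv (a b : nat) (h : T) : (h \in itv N a b) = (1 <= h) && (a <= h <= b).
Proof. by rewrite inE. Qed.

Lemma wrset2 (i j h : T) : 0 < i -> i < j ->
  (h \in wrset [set i; j]) =
  if odd (j - i) then (i <= h <= j) else (0 < h) && ((j <= h) || (h <= i)).
Proof.
move=> i0 lt; rewrite inE; apply/existsP/idP.
- move=> [i' /existsP [j' /and3P [/eqP E w hd]]].
  have [[e1 e2]|[e1 e2]] := set2_cases E lt; subst i' j'; move: w hd;
    rewrite /writ /ditv.
  + rewrite lt /= (ltnNge j i) (ltnW lt) /= orbF => -> /=; rewrite in_itv; lia.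
  + rewrite (ltnNge j i) (ltnW lt) /= lt /= => /negPf -> /=.
    rewrite inE !in_itv; move: (ltn_ord h); lia.
- case: ifP => od hh.
  + exists i; apply/existsP; exists j; rewrite eqxx /writ lt od /= /ditv lt in_itv.
    move: hh; lia.
  + exists j; apply/existsP; exists i; rewrite setUC eqxx /writ lt od /= ?orbT /=.
    rewrite /ditv (ltnNge j i) (ltnW lt) /=.
    rewrite inE !in_itv; move: hh (ltn_ord h); lia.
Qed.

End Basic.

Section Struct.
Variable N : nat.
Local Notation T := 'I_N.+1.
Variable B : {set {set T}}.
Hypothesis HPN : PN B.

Lemma B1sub : B1 B \subset B.
Proof. by apply/subsetP=> X; rewrite inE => /andP []. Qed.
Lemma B0sub : B0 B \subset B.
Proof. by apply/subsetP=> X; rewrite inE => /andP []. Qed.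

Lemma pairB (X : {set T}) : X \in B -> exists i j : T, [/\ 0 < i, i < j & X = [set i; j]].
Proof. move=> XB; have [c n0] := HPN.1 X XB; exact: pairP. Qed.

Lemma disjB (X Y : {set T}) (h : T) : X \in B -> Y \in B -> h \in X -> h \in Y -> X = Y.
Proof.
move=> XB YB hX hY; apply/eqP; apply/negPn/negP=> ne.
have := HPN.2 X Y XB YB ne; rewrite disjoint_sym => /disjoint_setI0 /setP /(_ h).
by rewrite !inE hX hY.
Qed.

Lemma ord0_supp (C : {set {set T}}) : C \subset B -> ord0 \notin supp C.
Proof.
move=> CB; apply/negP=> /bigcupP [X XC hX].
by have [_ /negP] := HPN.1 X (subsetP CB X XC).
Qed.

Lemma B01 (X : {set T}) : X \in B -> (X \in B0 B) = ~~ (X \in B1 B).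
Proof.
move=> XB; have [i [j [i0 lt EX]]] := pairB XB; subst X.
by rewrite inB0 // inB1 // XB.
Qed.


Lemma cov_elem (J : {set T}) (h : T) : cov0 B J -> h \in J ->
  exists c d : T, [/\ c < d, [set c; d] \in B1 B, c <= h <= d &
    forall x : T, c <= x <= d -> x \in J].
Proof.
move=> [C [CB1 [_ EJ]]]; rewrite EJ => /bigcupP [Z ZC hZ].
have ZB1 : Z \in B1 B := subsetP CB1 Z ZC.
have [c [d [c0 lt EZ]]] := pairB (subsetP B1sub Z ZB1); subst Z.
exists c, d; split=> //; first by rewrite -hull2 // ltnW.
by move=> x hx; apply/bigcupP; exists [set c; d] => //; rewrite hull2 // ltnW.
Qed.

Lemma pair_mem (c d x : T) : (x \in [set c; d]) = (x == c) || (x == d).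
Proof. by rewrite !inE. Qed.

Lemma pair_pos (i j : T) : [set i; j] \in B -> 0 < i /\ 0 < j.
Proof.
move=> ij; have [_ n0] := HPN.1 _ ij; split; rewrite lt0n; apply/negP => /eqP e;
  move/negP: n0; apply; rewrite !inE.
- have -> : ord0 = i :> T by apply: val_inj.
  by rewrite eqxx.
- have -> : ord0 = j :> T by apply: val_inj.
  by rewrite eqxx orbT.
Qed.

Hypothesis HSB : starBase B.

Lemma hull_supp (i j : T) : i < j -> [set i; j] \in B1 B ->
  forall h : T, i <= h <= j -> h \in supp (B1 B).
Proof.
move: {2}(j - i) (leqnn (j - i)) => n; elim: n i j => [|n IH] i j le lt ij h hh.
  by move: le lt; lia.
have [hi|hi] := eqVneq h i.
  by apply/bigcupP; exists [set i; j]; rewrite // hi !inE eqxx.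
have [hj|hj] := eqVneq h j.
  by apply/bigcupP; exists [set i; j]; rewrite // hj !inE eqxx orbT.
have [i0 _] := pair_pos (subsetP B1sub _ ij).
have hI : h \in itv N i.+1 j.-1.
  rewrite in_itv; move/eqP: hi => hi; move/eqP: hj => hj.
  have hi' : (h : nat) <> i by move=> e; apply: hi; apply: val_inj.
  have hj' : (h : nat) <> j by move=> e; apply: hj; apply: val_inj.
  move/andP: hh => [h1 h2]; lia.
have [c [d [cd cdB hcd sub]]] := cov_elem (HSB.2 i j ij lt) hI.
have hc : c \in itv N i.+1 j.-1 by apply: sub; rewrite (ltnW cd) leqnn.
have hd : d \in itv N i.+1 j.-1 by apply: sub; rewrite (ltnW cd) leqnn.
move: hc hd; rewrite !in_itv => /and3P [hc1 hc2 hc3] /and3P [hd1 hd2 hd3].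
move/andP: hcd => [hcd1 hcd2].
apply: (IH c d) => //; lia.
Qed.

Lemma noncross (i j p q : T) : i < j -> p < q -> [set i; j] \in B1 B ->
  [set p; q] \in B1 B -> ~ ((i < p) /\ (p < j) /\ (j < q)).
Proof.
move: {2}(j - i) (leqnn (j - i)) => n; elim: n i j => [|n IH] i j le lt pq ij PQ [ip [pj jq]].
  by move: le ip pj; lia.
have hI : p \in itv N i.+1 j.-1 by rewrite in_itv; lia.
have [c [d [cd cdB hcd sub]]] := cov_elem (HSB.2 i j ij lt) hI.
have hc : c \in itv N i.+1 j.-1 by apply: sub; rewrite (ltnW cd) leqnn.
have hd : d \in itv N i.+1 j.-1 by apply: sub; rewrite (ltnW cd) leqnn.
move: hc hd; rewrite !in_itv => /and3P [hc1 hc2 hc3] /and3P [hd1 hd2 hd3].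
move/andP: hcd => [hcd1 hcd2].
have [pc|pc] := eqVneq p c.
  have E : [set c; d] = [set p; q].
    apply: (disjB (h := p)); first exact: (subsetP B1sub _ cdB);
      first exact: (subsetP B1sub _ PQ); by rewrite ?pc !inE eqxx.
  have [_ dq] := set2_inj E cd pq; move: hd3; rewrite dq; lia.
have [pd|pd] := eqVneq p d.
  have E : [set c; d] = [set p; q].
    apply: (disjB (h := p)); first exact: (subsetP B1sub _ cdB);
      first exact: (subsetP B1sub _ PQ); by rewrite ?pd !inE eqxx ?orbT.
  have [_ dq] := set2_inj E cd pq; move: hd3; rewrite dq; lia.
have pc' : (p : nat) <> c by move=> e; apply: (negP pc); apply/eqP; apply: val_inj.
have pd' : (p : nat) <> d by move=> e; apply: (negP pd); apply/eqP; apply: val_inj.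
apply: (IH c d) => //; try lia.
Qed.


Lemma neq_pairs (c d p q : T) : [set c; d] \in B -> [set p; q] \in B ->
  [set c; d] != [set p; q] ->
  [/\ (p : nat) <> c, (p : nat) <> d, (q : nat) <> c & (q : nat) <> d].
Proof.
move=> cdB pqB ne.
have F : forall x : T, x \in [set c; d] -> x \in [set p; q] -> False.
  by move=> x h1 h2; move/negP: ne; apply; apply/eqP; apply: (disjB (h := x)).
split=> e; have ex := val_inj e.
- by apply: (F p); rewrite !inE ?ex eqxx ?orbT.
- by apply: (F p); rewrite !inE ?ex eqxx ?orbT.
- by apply: (F q); rewrite !inE ?ex eqxx ?orbT.
- by apply: (F q); rewrite !inE ?ex eqxx ?orbT.
Qed.

Lemma supp_pair (h : T) : h \in supp (B1 B) ->
  exists p q : T, [/\ p < q, [set p; q] \in B1 B & (h == p) || (h == q)].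
Proof.
move=> /bigcupP [X XB hX]; have [p [q [p0 pq EX]]] := pairB (subsetP B1sub _ XB).
by subst X; exists p, q; split=> //; rewrite !inE in hX.
Qed.

Lemma cov_supp (J : {set T}) (h : T) : cov0 B J -> h \in J -> h \in supp (B1 B).
Proof.
move=> cJ hJ; have [c [d [cd cdB /andP [h1 h2] _]]] := cov_elem cJ hJ.
apply: (hull_supp cd cdB); lia.
Qed.

Lemma pairs_inside (J : {set T}) (p q : T) : cov0 B J -> p < q -> [set p; q] \in B1 B ->
  (p \in J) || (q \in J) -> (p \in J) && (q \in J).
Proof.
move=> cJ pq PQ /orP [pJ|qJ].
- have [c [d [cd cdB /andP [h1 h2] sub]]] := cov_elem cJ pJ.
  have [E|ne] := eqVneq [set c; d] [set p; q].
    have [_ dq] := set2_inj E cd pq; rewrite pJ -dq sub // (ltnW cd) leqnn //.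
  have [n1 n2 n3 n4] := neq_pairs (subsetP B1sub _ cdB) (subsetP B1sub _ PQ) ne.
  rewrite pJ sub //=.
  case: (ltnP d q) => dq; last by lia.
  by exfalso; apply: (noncross cd pq cdB PQ); lia.
- have [c [d [cd cdB /andP [h1 h2] sub]]] := cov_elem cJ qJ.
  have [E|ne] := eqVneq [set c; d] [set p; q].
    have [cp _] := set2_inj E cd pq; rewrite qJ -cp sub // (ltnW cd) leqnn //.
  have [n1 n2 n3 n4] := neq_pairs (subsetP B1sub _ cdB) (subsetP B1sub _ PQ) ne.
  rewrite qJ sub ?andbT //.
  case: (ltnP p c) => pc; last by lia.
  by exfalso; apply: (noncross pq cd PQ cdB); lia.
Qed.

End Struct.

Section Card.
Variable N : nat.
Local Notation T := 'I_N.+1.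

Lemma cover_count (P : {set {set T}}) (K : pred T) : trivIset P ->
  (forall A, A \in P -> #|[set x in A | K x]| = 1) ->
  #|[set x in cover P | K x]| = #|P|.
Proof.
move=> tP H1.
rewrite -sum1dep_card (big_trivIset_cond _ tP) /= -sum1_card.
apply: eq_bigr => A AP; rewrite sum1dep_card -(H1 A AP).
by apply: eq_card => x; rewrite !inE.
Qed.

Lemma card_itv (a b : nat) : 1 <= a -> b <= N -> #|itv N a b| = b.+1 - a.
Proof.
move=> a1; elim: b => [|b IH] bN.
  rewrite (_ : itv N a 0 = set0) ?cards0 //; last first.
  by apply/setP=> h; rewrite in_itv inE; lia.
  lia.
have x_val : (inord b.+1 : T) = b.+1 :> nat by rewrite inordK.
case: (leqP a b.+1) => ab.
  have E : itv N a b.+1 = (inord b.+1 : T) |: itv N a b.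
    apply/setP=> h; rewrite !inE -val_eqE /= x_val; lia.
  have nin : (inord b.+1 : T) \notin itv N a b by rewrite in_itv x_val; lia.
  by rewrite E cardsU1 nin IH; lia.
have E : itv N a b.+1 = itv N a b by apply/setP=> h; rewrite !in_itv; lia.
by rewrite E IH; lia.
Qed.


Lemma cov_even (B : {set {set T}}) (a b : nat) : PN B -> starBase B ->
  cov0 B (itv N a b) -> 1 <= a -> b <= N -> ~~ odd (b.+1 - a).
Proof.
move=> HPN HSB cJ a1 bN.
set J := itv N a b; set P := [set X in B1 B | X \subset J].
have tP : trivIset P.
  apply/trivIsetP => X Y /setIdP [XB _] /setIdP [YB _] ne.
  exact: HPN.2 X Y (subsetP (B1sub B) _ XB) (subsetP (B1sub B) _ YB) ne.
have cP : cover P = J.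
  apply/setP=> h; apply/bigcupP/idP.
  - by move=> [X] /setIdP [_ /subsetP XJ] /XJ.
  - move=> hJ; have [p [q [pq PQ hpq]]] := supp_pair HPN (cov_supp HPN HSB cJ hJ).
    have /andP [pJ qJ] : (p \in J) && (q \in J).
      apply: (pairs_inside HPN HSB cJ pq PQ).
      by case/orP: hpq => /eqP <-; rewrite hJ ?orbT.
    exists [set p; q]; last by rewrite !inE.
    apply/setIdP; split=> //; apply/subsetP=> x /set2P [] ->.
    exact: pJ. exact: qJ.
have part : partition P J.
  rewrite /partition cP eqxx tP /=; apply/negP => /setIdP [XB _].
  by have [c _] := HPN.1 _ (subsetP (B1sub B) _ XB); rewrite cards0 in c.
have := card_uniform_partition (n := 2) _ part.
rewrite card_itv // => ->; first by rewrite oddM andbF.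
move=> X /setIdP [XB _]; exact: (HPN.1 _ (subsetP (B1sub B) _ XB)).1.
Qed.

End Card.

Section Mono.
Variables (s N u : nat) (f : nat -> nat) (free : nat -> bool).
Hypothesis Hs : odd s.
Hypothesis Hfree0 : ~~ free 0.
Hypothesis Hfree : forall k, 1 <= k <= 2 * s -> free (f k).
Hypothesis Hinj : forall j k, 1 <= j <= 2 * s -> 1 <= k <= 2 * s -> f j = f k -> j = k.
Hypothesis Hpair : forall k, 1 <= k <= s -> f k < f (2 * s + 1 - k).
Hypothesis HpairPar : forall k, 1 <= k <= s -> odd (f k) = odd (f (2 * s + 1 - k)).
Hypothesis HN : forall k, 1 <= k <= 2 * s -> f k < N.
Hypothesis Hgap : forall k, (1 <= k < s) || (s + 1 <= k < 2 * s) ->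
  forall h, f k < h < f k.+1 -> ~~ free h.
Hypothesis HgapPar : forall k, (1 <= k < s) || (s + 1 <= k < 2 * s) ->
  f k < f k.+1 -> odd (f k.+1 - f k).

Lemma inj_ne j k : 1 <= j <= 2 * s -> 1 <= k <= 2 * s -> j != k -> f j != f k.
Proof. by move=> hj hk ne; apply/eqP=> e; move/eqP: ne; apply; apply: Hinj. Qed.

Section CaseII.
Hypothesis Hlow : forall h, 1 <= h < f 1 -> ~~ free h.
Hypothesis Hf1 : odd (f 1).
Hypothesis Hhigh : forall h, f (2 * s) < h < N -> h != u -> ~~ free h.
Hypothesis Hu : ~~ odd u.
Hypothesis Hu2 : f (2 * s) < u.

Lemma first_half2 k : 1 <= k <= s ->
  (forall j, 1 <= j < k -> f j < f j.+1) /\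
  (forall h, free h -> h < f k -> exists j, 1 <= j < k /\ h = f j).
Proof.
elim: k => [|k IH] // /andP [k1 ks].
have [->|k0] := eqVneq k 0.
  split=> [j|h fh hlt]; first lia.
  case: (posnP h) => [h0|hpos]; first by move: fh; rewrite h0 (negPf Hfree0).
  by move: fh; rewrite (negPf (Hlow _)) //; lia.
have [IH1 IH2] := IH (ltac:(lia)).
have fk1 := Hfree (ltac:(lia) : 1 <= k.+1 <= 2 * s).
have lt : f k < f k.+1.
  case: (ltngtP (f k) (f k.+1)) => // c.
  - have [j [hj e]] := IH2 _ fk1 c.
    have := Hinj (ltac:(lia) : 1 <= k.+1 <= 2 * s) (ltac:(lia) : 1 <= j <= 2 * s) e; lia.
  - have := Hinj (ltac:(lia) : 1 <= k <= 2 * s) (ltac:(lia) : 1 <= k.+1 <= 2 * s) c; lia.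
split=> [j hj|h fh hlt].
  case: (ltnP j k) => jk; first by apply: IH1; lia.
  by have -> : j = k by lia.
case: (ltngtP h (f k)) => c.
- have [j [hj e]] := IH2 _ fh c; exists j; split=> //; lia.
- have := Hgap (ltac:(lia) : (1 <= k < s) || (s + 1 <= k < 2 * s)) (h := h).
  by rewrite c hlt fh => /(_ isT).
- by exists k; split=> //; lia.
Qed.

Lemma par_first k : (forall j, 1 <= j < s -> f j < f j.+1) ->
  1 <= k <= s -> ~~ odd (f k + f 1 + k + 1).
Proof.
move=> inc; elim: k => [|k IH] // /andP [k1 ks].
have [->|k0] := eqVneq k 0; first lia.
have := IH (ltac:(lia)); have := inc k (ltac:(lia)) => lt.
have := HgapPar (ltac:(lia) : (1 <= k < s) || (s + 1 <= k < 2 * s)) lt; lia.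
Qed.

Lemma second_half2 t : t < s ->
  (forall j, 2 * s - t <= j < 2 * s -> f j < f j.+1) /\
  (forall h, free h -> f (2 * s - t) < h < N -> h != u ->
     exists j, 2 * s - t < j <= 2 * s /\ h = f j).
Proof.
have [F1 F2] := first_half2 (ltac:(lia) : 1 <= s <= s).
have Ps := par_first F1 (ltac:(lia) : 1 <= s <= s).
elim: t => [|t IH] ts.
  split=> [j|h fh /andP [h1 h2] hu]; first lia.
  by move: fh; rewrite (negPf (Hhigh _ hu)) //; rewrite subn0 in h1; lia.
have [IH1 IH2] := IH (ltac:(lia)).
set k := 2 * s - t.
have kdef : k = 2 * s - t by [].
have fk1 := Hfree (ltac:(lia) : 1 <= k.-1 <= 2 * s).
have fkN := HN (ltac:(lia) : 1 <= k.-1 <= 2 * s).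
have lt : f k.-1 < f k.
  case: (ltngtP (f k.-1) (f k)) => // c.
  - have [eu|neu] := eqVneq (f k.-1) u.
      have [ks1|ks1] := eqVneq k.-1 s.+1.
        have := HpairPar (ltac:(lia) : 1 <= s <= s).
        have -> : 2 * s + 1 - s = k.-1 by lia.
        rewrite eu (negPf Hu); move: Ps Hf1; lia.
      have fk2 := Hfree (ltac:(lia) : 1 <= k.-2 <= 2 * s).
      have f2s := Hfree (ltac:(lia) : 1 <= 2 * s <= 2 * s).
      have ne2 : f k.-2 != f k.-1 by apply: inj_ne; lia.
      have ne3 : f k.-2 != f (2 * s) by apply: inj_ne; lia.
      have fk2N := HN (ltac:(lia) : 1 <= k.-2 <= 2 * s).
      have ksk : f k <= f (2 * s).
        have : forall m, m <= t -> f (2 * s - m) <= f (2 * s).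
          elim=> [|m IHm] hm; first by rewrite subn0.
          have := IH1 (2 * s - m.+1) (ltac:(lia)).
          have -> : (2 * s - m.+1).+1 = 2 * s - m by lia.
          have := IHm (ltac:(lia)); lia.
        by move/(_ t (leqnn t)).
      case: (ltngtP (f k.-2) (f (2 * s))) => c2.
      + have := Hgap (ltac:(lia) : (1 <= k.-2 < s) || (s + 1 <= k.-2 < 2 * s)) (h := f (2 * s)).
        have -> : (k.-2).+1 = k.-1 by lia.
        by rewrite c2 eu Hu2 f2s => /(_ isT).
      + have [j [hj e]] : exists j, 2 * s - t < j <= 2 * s /\ f k.-2 = f j.
          apply: IH2 => //; last by rewrite eu in ne2.
          by rewrite -kdef; apply/andP; split; lia.
        have := Hinj (ltac:(lia) : 1 <= k.-2 <= 2 * s) (ltac:(lia) : 1 <= j <= 2 * s) e; lia.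
      + by move/eqP: ne3.
    have [j [hj e]] : exists j, 2 * s - t < j <= 2 * s /\ f k.-1 = f j.
      by apply: IH2 => //; rewrite -kdef; apply/andP; split; lia.
    have := Hinj (ltac:(lia) : 1 <= k.-1 <= 2 * s) (ltac:(lia) : 1 <= j <= 2 * s) e; lia.
  - have := Hinj (ltac:(lia) : 1 <= k.-1 <= 2 * s) (ltac:(lia) : 1 <= k <= 2 * s) c; lia.
have km : 2 * s - t.+1 = k.-1 by lia.
rewrite km; split=> [j hj|h fh /andP [h1 h2] hu].
  case: (ltnP k.-1 j) => jk; first by apply: IH1; lia.
  have -> : j = k.-1 by lia.
  by have -> : (k.-1).+1 = k by lia.
case: (ltngtP h (f k)) => c.
- have := Hgap (ltac:(lia) : (1 <= k.-1 < s) || (s + 1 <= k.-1 < 2 * s)) (h := h).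
  have -> : (k.-1).+1 = k by lia.
  by rewrite c h1 fh => /(_ isT).
- have [j [hj e]] : exists j, 2 * s - t < j <= 2 * s /\ h = f j.
    by apply: IH2 => //; rewrite -kdef; apply/andP; split; lia.
  exists j; split=> //; lia.
- by exists k; split=> //; lia.
Qed.

Lemma mono2 k : 1 <= k < 2 * s -> f k < f k.+1.
Proof.
move=> hk.
have [F1 _] := first_half2 (ltac:(lia) : 1 <= s <= s).
have [S1 _] := second_half2 (ltac:(lia) : s.-1 < s).
case: (ltngtP k s) => c.
- apply: F1; lia.
- apply: S1; lia.
- have H := Hpair (ltac:(lia) : 1 <= s <= s).
  have E : 2 * s + 1 - s = s.+1 by lia.
  by rewrite E in H; rewrite c.
Qed.

End CaseII.


Section CaseI.
Hypothesis Hlow : forall h, 1 <= h < f 1 -> h != u -> ~~ free h.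
Hypothesis Hu1 : u < f 1.
Hypothesis Hu : odd u.
Hypothesis Hf2s : ~~ odd (f (2 * s)).
Hypothesis Hhigh : forall h, f (2 * s) < h < N -> ~~ free h.

Lemma second_half1 t : t < s ->
  (forall j, 2 * s - t <= j < 2 * s -> f j < f j.+1) /\
  (forall h, free h -> f (2 * s - t) < h < N ->
     exists j, 2 * s - t < j <= 2 * s /\ h = f j) /\
  ~~ odd (f (2 * s - t) + t).
Proof.
elim: t => [|t IH] ts.
  split=> [j|]; first lia.
  split=> [h fh /andP [h1 h2]|]; last by rewrite subn0 addn0.
  by move: fh; rewrite (negPf (Hhigh _)) //; rewrite subn0 in h1; lia.
have [IH1 [IH2 IH3]] := IH (ltac:(lia)).
set k := 2 * s - t.
have kdef : k = 2 * s - t by [].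
have fk1 := Hfree (ltac:(lia) : 1 <= k.-1 <= 2 * s).
have fkN := HN (ltac:(lia) : 1 <= k.-1 <= 2 * s).
have lt : f k.-1 < f k.
  case: (ltngtP (f k.-1) (f k)) => // c.
  - have [j [hj e]] : exists j, 2 * s - t < j <= 2 * s /\ f k.-1 = f j.
      by apply: IH2 => //; rewrite -kdef; apply/andP; split; lia.
    have := Hinj (ltac:(lia) : 1 <= k.-1 <= 2 * s) (ltac:(lia) : 1 <= j <= 2 * s) e; lia.
  - have := Hinj (ltac:(lia) : 1 <= k.-1 <= 2 * s) (ltac:(lia) : 1 <= k <= 2 * s) c; lia.
have km : 2 * s - t.+1 = k.-1 by lia.
rewrite km; split=> [j hj|]; last split=> [h fh /andP [h1 h2]|].
- case: (ltnP k.-1 j) => jk; first by apply: IH1; lia.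
  have -> : j = k.-1 by lia.
  by have -> : (k.-1).+1 = k by lia.
- case: (ltngtP h (f k)) => c.
  + have := Hgap (ltac:(lia) : (1 <= k.-1 < s) || (s + 1 <= k.-1 < 2 * s)) (h := h).
    have -> : (k.-1).+1 = k by lia.
    by rewrite c h1 fh => /(_ isT).
  + have [j [hj e]] : exists j, 2 * s - t < j <= 2 * s /\ h = f j.
      by apply: IH2 => //; rewrite -kdef; apply/andP; split; lia.
    exists j; split=> //; lia.
  + by exists k; split=> //; lia.
- have := HgapPar (ltac:(lia) : (1 <= k.-1 < s) || (s + 1 <= k.-1 < 2 * s)).
  have -> : (k.-1).+1 = k by lia.
  move=> /(_ lt); move: IH3; rewrite -kdef; lia.
Qed.

Lemma first_half1 k : 1 <= k <= s ->
  (forall j, 1 <= j < k -> f j < f j.+1) /\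
  (forall h, free h -> h < f k -> h = u \/ exists j, 1 <= j < k /\ h = f j).
Proof.
have [_ [_ P1]] := second_half1 (ltac:(lia) : s.-1 < s).
have e1 : 2 * s - s.-1 = s.+1 by lia.
rewrite e1 in P1.
elim: k => [|k IH] // /andP [k1 ks].
have [->|k0] := eqVneq k 0.
  split=> [j|h fh hlt]; first lia.
  case: (posnP h) => [h0|hpos]; first by move: fh; rewrite h0 (negPf Hfree0).
  have [hu|hu] := eqVneq h u; first by left.
  by move: fh; rewrite (negPf (Hlow _ hu)) //; lia.
have [IH1 IH2] := IH (ltac:(lia)).
have fk1 := Hfree (ltac:(lia) : 1 <= k.+1 <= 2 * s).
have f1k : f 1 <= f k.
  have : forall m, 1 <= m <= k -> f 1 <= f m.
    elim=> [|m IHm] // /andP [m1 mk].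
    have [->|m0] := eqVneq m 0; first by [].
    have := IHm (ltac:(lia)); have := IH1 m (ltac:(lia)); lia.
  by apply; lia.
have lt : f k < f k.+1.
  case: (ltngtP (f k) (f k.+1)) => // c.
  - have [eu|[j [hj e]]] := IH2 _ fk1 c; last first.
      have := Hinj (ltac:(lia) : 1 <= k.+1 <= 2 * s) (ltac:(lia) : 1 <= j <= 2 * s) e; lia.
    have [ks1|ks1] := eqVneq k.+1 s.
      have := HpairPar (ltac:(lia) : 1 <= s <= s).
      have -> : 2 * s + 1 - s = s.+1 by lia.
      rewrite ks1 in eu; rewrite eu Hu; move: P1 Hs; lia.
    have fk2 := Hfree (ltac:(lia) : 1 <= k.+2 <= 2 * s).
    have f1f := Hfree (ltac:(lia) : 1 <= 1 <= 2 * s).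
    have ne2 : f k.+2 != f k.+1 by apply: inj_ne; lia.
    have ne3 : f k.+2 != f 1 by apply: inj_ne; lia.
    case: (ltngtP (f k.+2) u) => c2.
    + have [e2|[j [hj e]]] := IH2 _ fk2 (ltac:(lia)).
        by move: ne2; rewrite e2 eu eqxx.
      have := Hinj (ltac:(lia) : 1 <= k.+2 <= 2 * s) (ltac:(lia) : 1 <= j <= 2 * s) e; lia.
    + case: (ltngtP (f k.+2) (f 1)) => c3.
      * have [e2|[j [hj e]]] := IH2 _ fk2 (ltac:(lia)).
          by move: ne2; rewrite e2 eu eqxx.
        have := Hinj (ltac:(lia) : 1 <= k.+2 <= 2 * s) (ltac:(lia) : 1 <= j <= 2 * s) e; lia.
      * have := Hgap (ltac:(lia) : (1 <= k.+1 < s) || (s + 1 <= k.+1 < 2 * s)) (h := f 1).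
        by rewrite eu Hu1 c3 f1f => /(_ isT).
      * by move/eqP: ne3.
    + by move: ne2; rewrite c2 eu eqxx.
  - have := Hinj (ltac:(lia) : 1 <= k <= 2 * s) (ltac:(lia) : 1 <= k.+1 <= 2 * s) c; lia.
split=> [j hj|h fh hlt].
  case: (ltnP j k) => jk; first by apply: IH1; lia.
  by have -> : j = k by lia.
case: (ltngtP h (f k)) => c.
- have [e|[j [hj e]]] := IH2 _ fh c; first by left.
  right; exists j; split=> //; lia.
- have := Hgap (ltac:(lia) : (1 <= k < s) || (s + 1 <= k < 2 * s)) (h := h).
  by rewrite c hlt fh => /(_ isT).
- by right; exists k; split=> //; lia.
Qed.

Lemma mono1 k : 1 <= k < 2 * s -> f k < f k.+1.
Proof.
move=> hk.
have [F1 _] := first_half1 (ltac:(lia) : 1 <= s <= s).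
have [S1 _] := second_half1 (ltac:(lia) : s.-1 < s).
case: (ltngtP k s) => c.
- apply: F1; lia.
- apply: S1; lia.
- have H := Hpair (ltac:(lia) : 1 <= s <= s).
  have E : 2 * s + 1 - s = s.+1 by lia.
  by rewrite E in H; rewrite c.
Qed.

End CaseI.

End Mono.

Lemma count_ge (k0 s : nat) : 1 <= k0 <= s.+1 ->
  count (fun k => k0 <= k) (iota 1 s) = s.+1 - k0.
Proof.
elim: s => [|s IH] h; first by rewrite /=; lia.
have -> : iota 1 s.+1 = iota 1 s ++ [:: s.+1] by rewrite -[in LHS](addn1 s) iotaD add1n.
rewrite count_cat /= addn0.
case: (leqP k0 s.+1) => c.
  rewrite IH; last lia.
  lia.
rewrite (eq_in_count (a2 := pred0)); first by rewrite count_pred0; lia.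
by move=> k; rewrite mem_iota /=; lia.
Qed.

Lemma neqF (b : bool) : (b != false) = b. Proof. by case: b. Qed.

Section Eval.
Variables (s N u : nat) (f : nat -> nat) (free : nat -> bool).
Hypothesis Hs : odd s.
Hypothesis Hinj : forall j k, 1 <= j <= 2 * s -> 1 <= k <= 2 * s -> f j = f k -> j = k.
Hypothesis HpairPar : forall k, 1 <= k <= s -> odd (f k) = odd (f (2 * s + 1 - k)).
Hypothesis HN : forall k, 1 <= k <= 2 * s -> f k < N.
Hypothesis Hgap : forall k, (1 <= k < s) || (s + 1 <= k < 2 * s) ->
  forall h, f k < h < f k.+1 -> ~~ free h.
Hypothesis HgapPar : forall k, (1 <= k < s) || (s + 1 <= k < 2 * s) ->
  f k < f k.+1 -> odd (f k.+1 - f k).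
Hypothesis Hmono : forall k, 1 <= k < 2 * s -> f k < f k.+1.

Lemma smono j k : 1 <= j -> j < k -> k <= 2 * s -> f j < f k.
Proof.
move=> j1 jk; elim: k jk => [|k IH] // jk k2.
case: (ltngtP j k) => c.
- have := IH c (ltac:(lia)); have := Hmono (ltac:(lia) : 1 <= k < 2 * s); lia.
- lia.
- by rewrite c; apply: Hmono; lia.
Qed.



Definition cnt (x : nat) := count (fun k => (x <= f k) || (f (2 * s + 1 - k) <= x)) (iota 1 s).

Lemma cnt_f k0 : 1 <= k0 <= s -> cnt (f k0) = s.+1 - k0.
Proof.
move=> hk; rewrite /cnt -count_ge //; last lia.
apply: eq_in_count => k; rewrite mem_iota => hk2.
case: (ltngtP k0 k) => c.
- by have := smono (ltac:(lia) : 1 <= k0) c (ltac:(lia)); lia.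
- have := smono (ltac:(lia) : 1 <= k) c (ltac:(lia)).
  have := smono (ltac:(lia) : 1 <= k0) (ltac:(lia) : k0 < 2 * s + 1 - k) (ltac:(lia)); lia.
- by rewrite c leqnn.
Qed.

Lemma cnt_f2 k0 : 1 <= k0 <= s -> cnt (f (2 * s + 1 - k0)) = s.+1 - k0.
Proof.
move=> hk; rewrite /cnt -count_ge //; last lia.
apply: eq_in_count => k; rewrite mem_iota => hk2.
have A := smono (ltac:(lia) : 1 <= k) (ltac:(lia) : k < 2 * s + 1 - k0) (ltac:(lia)).
case: (ltngtP k0 k) => c.
- have := smono (ltac:(lia) : 1 <= 2 * s + 1 - k) (ltac:(lia) : 2 * s + 1 - k < 2 * s + 1 - k0) (ltac:(lia)); lia.
- have := smono (ltac:(lia) : 1 <= 2 * s + 1 - k0) (ltac:(lia) : 2 * s + 1 - k0 < 2 * s + 1 - k) (ltac:(lia)); lia.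
- by rewrite c leqnn orbT; lia.
Qed.

Lemma cnt_mid x : f s < x < f s.+1 -> cnt x = 0.
Proof.
move=> hx; rewrite /cnt (eq_in_count (a2 := pred0)) ?count_pred0 // => k.
rewrite mem_iota => hk /=.
have B : f k <= f s.
  case: (ltngtP k s) => c; last by rewrite c.
  - by have := smono (ltac:(lia) : 1 <= k) c (ltac:(lia)); lia.
  - lia.
have C : f s.+1 <= f (2 * s + 1 - k).
  case: (ltngtP s.+1 (2 * s + 1 - k)) => c; last by rewrite c.
  - by have := smono (ltac:(lia) : 1 <= s.+1) c (ltac:(lia)); lia.
  - lia.
lia.
Qed.

Lemma cnt_low x : x <= f 1 -> cnt x = s.
Proof.
move=> hx; rewrite /cnt (eq_in_count (a2 := predT)) ?count_predT ?size_iota // => k.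
rewrite mem_iota => hk /=.
case: (ltngtP 1 k) => c.
- by have := smono (ltac:(lia) : 1 <= 1) c (ltac:(lia)); lia.
- lia.
- by rewrite -c hx.
Qed.

Lemma cnt_high x : f (2 * s) <= x -> cnt x = s.
Proof.
move=> hx; rewrite /cnt (eq_in_count (a2 := predT)) ?count_predT ?size_iota // => k.
rewrite mem_iota => hk /=.
case: (ltngtP (2 * s + 1 - k) (2 * s)) => c.
- by have := smono (ltac:(lia) : 1 <= 2 * s + 1 - k) c (ltac:(lia)); lia.
- lia.
- by rewrite c hx orbT.
Qed.

Lemma locate x : f 1 <= x <= f (2 * s) -> free x ->
  (exists k, 1 <= k <= s /\ (x = f k \/ x = f (2 * s + 1 - k))) \/ f s < x < f s.+1.
Proof.
move=> /andP [h1 h2] fx.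
have H : forall m, 1 <= m <= 2 * s ->
  (exists k, 1 <= k <= m /\ x = f k) \/ (exists k, 1 <= k < m /\ f k < x < f k.+1) \/ f m < x.
  elim=> [|m IH] // /andP [m1 m2].
  have [->|m0] := eqVneq m 0.
    case: (ltngtP (f 1) x) => c; [by right; right | lia | by left; exists 1].
  case: (IH (ltac:(lia))) => [[k [hk e]]|[[k [hk e]]|c]].
  - by left; exists k; split=> //; lia.
  - by right; left; exists k; split=> //; lia.
  - case: (ltngtP (f m.+1) x) => c2.
    + by right; right.
    + by right; left; exists m; split=> //; lia.
    + by left; exists m.+1; split=> //; lia.
case: (H (2 * s) (ltac:(lia))) => [[k [hk e]]|[[k [hk e]]|c]]; last by lia.
- left; case: (leqP k s) => ks.
    by exists k; split=> //; [lia | left].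
  exists (2 * s + 1 - k); split; first lia.
  by right; have -> : 2 * s + 1 - (2 * s + 1 - k) = k by lia.
- case: (eqVneq k s) => [ks|ks]; first by right; rewrite -ks.
  have := Hgap (ltac:(lia) : (1 <= k < s) || (s + 1 <= k < 2 * s)) e.
  by rewrite fx.
Qed.


Hypothesis Hpar : forall k, 1 <= k <= s -> ~~ odd (f k + f 1 + k + 1).

Lemma fk_le k : 1 <= k <= 2 * s -> f 1 <= f k <= f (2 * s).
Proof.
move=> hk; apply/andP; split.
- case: (ltngtP 1 k) => c; [by have := smono (leqnn 1) c (ltac:(lia)); lia| lia| by rewrite c].
- case: (ltngtP k (2 * s)) => c; [by have := smono (ltac:(lia) : 1 <= k) c (leqnn _); lia| lia| by rewrite c].
Qed.

Lemma par_any k : 1 <= k <= s -> odd (s.+1 - k) ->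
  odd (f k) = odd (f 1) /\ odd (f (2 * s + 1 - k)) = odd (f 1).
Proof.
move=> hk od; have := Hpar hk; have := HpairPar hk; move: Hs od; lia.
Qed.

Section EII.
Hypothesis Hlow : forall h, 1 <= h < f 1 -> ~~ free h.
Hypothesis Hhigh : forall h, f (2 * s) < h < N -> h != u -> ~~ free h.
Hypothesis Hu2 : f (2 * s) < u.
Hypothesis Hu3 : u < N.

Lemma evalII1 : odd (cnt (f 1)) != (u <= f 1).
Proof.
have := fk_le (ltac:(move: Hs; lia) : 1 <= 1 <= 2 * s).
by rewrite cnt_low // Hs; lia.
Qed.

Lemma evalII2 x : free x -> 1 <= x <= N -> odd (cnt x) != (u <= x) ->
  odd x = odd (f 1).
Proof.
move=> fx hx Y.
have s1 : 1 <= s by move: Hs; lia.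
have F2 := fk_le (ltac:(lia) : 1 <= 2 * s <= 2 * s).
case: (ltnP x (f 1)) => c1.
  by move: fx; rewrite (negPf (Hlow _)) //; lia.
case: (leqP x (f (2 * s))) => c2; last first.
  move: Y; rewrite cnt_high; last lia.
  have [xu|xu] := eqVneq x u; first by rewrite xu leqnn Hs.
  case: (ltnP x N) => c3; first by move: fx; rewrite (negPf (Hhigh _ xu)) //; lia.
  rewrite Hs; have -> : u <= x by lia. by [].
case: (locate (ltac:(lia) : f 1 <= x <= f (2 * s)) fx) => [[k [hk [e|e]]]|hm].
- move: Y; rewrite e cnt_f //; have := fk_le (ltac:(lia) : 1 <= k <= 2 * s).
  move=> hh; have -> : (u <= f k) = false by lia.
  by rewrite neqF => /(par_any hk) [].
- move: Y; rewrite e cnt_f2 //; have := fk_le (ltac:(lia) : 1 <= 2 * s + 1 - k <= 2 * s).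
  move=> hh; have -> : (u <= f (2 * s + 1 - k)) = false by lia.
  by rewrite neqF => /(par_any hk) [].
- move: Y; rewrite cnt_mid //.
  have := fk_le (ltac:(lia) : 1 <= s.+1 <= 2 * s); lia.
Qed.
End EII.

Section EI.
Hypothesis Hlow : forall h, 1 <= h < f 1 -> h != u -> ~~ free h.
Hypothesis Hhigh : forall h, f (2 * s) < h < N -> ~~ free h.
Hypothesis Hu1 : u < f 1.
Hypothesis Hu0 : 1 <= u.
Hypothesis HfN : f (2 * s) < N.

Lemma evalI1 : odd (cnt (f 1)) != ((f 1 == N) != (f 1 <= u)).
Proof.
have := fk_le (ltac:(move: Hs; lia) : 1 <= 1 <= 2 * s).
rewrite cnt_low // Hs => hh.
have -> : (f 1 == N) = false by apply/eqP; lia.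
by have -> : (f 1 <= u) = false by lia.
Qed.

Lemma evalI2 x : free x -> 1 <= x <= N -> odd (cnt x) != ((x == N) != (x <= u)) ->
  odd x = odd (f 1).
Proof.
move=> fx hx Y.
have s1 : 1 <= s by move: Hs; lia.
have F2 := fk_le (ltac:(lia) : 1 <= 2 * s <= 2 * s).
case: (ltnP x (f 1)) => c1.
  have [xu|xu] := eqVneq x u; last by move: fx; rewrite (negPf (Hlow _ xu)) //; lia.
  move: Y; rewrite cnt_low; last lia.
  rewrite xu leqnn Hs; have -> : (u == N) = false by apply/eqP; lia.
  by [].
case: (leqP x (f (2 * s))) => c2; last first.
  move: Y; rewrite cnt_high; last lia.
  case: (ltnP x N) => c3; first by move: fx; rewrite (negPf (Hhigh _)) //; lia.
  have -> : x = N by lia.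
  by rewrite eqxx Hs; have -> : (N <= u) = false by lia.
have hxN : (x == N) = false by apply/eqP; lia.
have hxu : (x <= u) = false by lia.
move: Y; rewrite hxN hxu /=.
case: (locate (ltac:(lia) : f 1 <= x <= f (2 * s)) fx) => [[k [hk [e|e]]]|hm].
- by rewrite e cnt_f // neqF => /(par_any hk) [].
- by rewrite e cnt_f2 // neqF => /(par_any hk) [].
- by rewrite cnt_mid.
Qed.
End EI.

End Eval.

Section Index.
Variable N : nat.
Local Notation T := 'I_N.+1.
Variable B : {set {set T}}.
Hypothesis HPN : PN B.

Lemma B0_notsupp1 (X : {set T}) (x : T) : X \in B0 B -> x \in X -> x \notin supp (B1 B).
Proof.
move=> XB0 xX; apply/negP => /bigcupP [Z ZB1 xZ].
have XB := subsetP (B0sub B) _ XB0; have ZB := subsetP (B1sub B) _ ZB1.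
have E := disjB HPN XB ZB xX xZ; subst Z.
by move: XB0; rewrite (B01 HPN XB) ZB1.
Qed.

Variables (f : nat -> T) (s : nat).
Hypothesis HsP : seqP B f s.
Let pr k := [set f (2 * s + 1 - k); f k].

Lemma idx_card : #|[set k : 'I_s.+1 | 0 < k]| = s.
Proof.
have -> : [set k : 'I_s.+1 | 0 < k] = [set~ ord0].
  by apply/setP=> k; rewrite !inE lt0n -val_eqE.
by rewrite cardsC1 card_ord.
Qed.

Lemma B0_img : B0 B = [set pr (val k) | k in [set k : 'I_s.+1 | 0 < k]].
Proof.
have [_ [_ [_ [H _]]]] := HsP.
apply/setP=> X; apply/idP/imsetP.
- move/H=> [k [hk ->]]; exists (inord k); try (rewrite inE inordK; lia).
  by rewrite /pr /= inordK //; lia.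
- move=> [k]; rewrite inE => k0 ->; apply/H; exists k; split=> //.
  by have := ltn_ord k; lia.
Qed.

Lemma pr_inj j k : 1 <= j <= s -> 1 <= k <= s -> pr j = pr k -> j = k.
Proof.
move=> hj hk e.
have I : {in [set k : 'I_s.+1 | 0 < k] &, injective (fun k : 'I_s.+1 => pr (val k))}.
  apply/imset_injP; rewrite -B0_img idx_card; have [-> _] := HsP; by [].
have := I (inord j) (inord k); rewrite !inE !inordK; try lia.
have e' : pr (val (inord j : 'I_s.+1)) = pr (val (inord k : 'I_s.+1)).
  by rewrite /= !inordK //; lia.
by move=> /(_ (ltac:(lia)) (ltac:(lia)) e') /(congr1 val); rewrite /= !inordK //; lia.
Qed.

Lemma pr_in k : 1 <= k <= s -> pr k \in B0 B.
Proof. by move=> hk; have [_ [_ [_ [H _]]]] := HsP; apply/H; exists k. Qed.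

Lemma f_inj j k : 1 <= j <= 2 * s -> 1 <= k <= 2 * s -> f j = f k -> j = k.
Proof.
move=> hj hk e.
have [_ [_ [Hlt _]]] := HsP.
pose kap m := if m <= s then m else 2 * s + 1 - m.
have kapP : forall m, 1 <= m <= 2 * s -> 1 <= kap m <= s /\ f m \in pr (kap m).
  move=> m hm; rewrite /kap /pr; case: ifP => c; split; try lia.
  - by rewrite !inE eqxx orbT.
  - have -> : 2 * s + 1 - (2 * s + 1 - m) = m by lia.
  by rewrite !inE eqxx.
have [k1 m1] := kapP j hj; have [k2 m2] := kapP k hk.
have E : pr (kap j) = pr (kap k).
  apply: (disjB HPN (h := f j)); rewrite ?(subsetP (B0sub B)) ?pr_in //.
  by rewrite e.
have K := pr_inj k1 k2 E.
move: K; rewrite /kap; case: ifP => c1; case: ifP => c2 K; try lia.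
- have := (Hlt j (ltac:(lia))).1; rewrite e K.
  have -> : 2 * s + 1 - (2 * s + 1 - k) = k by lia.
  by rewrite ltnn.
- have := (Hlt k (ltac:(lia))).1; rewrite -e -K.
  have -> : 2 * s + 1 - (2 * s + 1 - j) = j by lia.
  by rewrite ltnn.
Qed.

Lemma card_B0_index (Q : {set T} -> bool) :
  #|[set X in B0 B | Q X]| = count (fun k => Q (pr k)) (iota 1 s).
Proof.
have -> : [set X in B0 B | Q X] =
    [set pr (val k) | k in [set k : 'I_s.+1 | (0 < k) && Q (pr k)]].
  apply/setP=> X; rewrite inE B0_img; apply/andP/imsetP.
  - move=> [/imsetP [k]]; rewrite inE => k0 -> q; exists k => //; by rewrite inE k0.
  - move=> [k]; rewrite inE => /andP [k0 q] ->; split=> //.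
    by apply/imsetP; exists k; rewrite ?inE.
rewrite card_in_imset; last first.
  move=> a b; rewrite !inE => /andP [a0 _] /andP [b0 _] e; apply: val_inj.
  have := ltn_ord a; have := ltn_ord b => hb ha.
  by apply: pr_inj => //=; lia.
rewrite -sum1dep_card -(big_mkord (fun k => (0 < k) && Q (pr k)) (fun _ => 1)).
rewrite /index_iota subn0 -sum1_count.
have -> : iota 0 s.+1 = 0 :: iota 1 s by [].
rewrite big_cons /= [LHS]big_seq_cond [RHS]big_seq_cond; apply: eq_bigl => i.
by rewrite mem_iota; case: (posnP i) => [->|].
Qed.

End Index.

Lemma memSetId (U : finType) (Z : {set U}) (P : pred U) (x : U) :
  (x \in [set y in Z | P y]) = (x \in Z) && P x.
Proof. by rewrite in_set. Qed.

Section Gen.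
Variable N : nat.
Local Notation T := 'I_N.+1.
Variable B : {set {set T}}.
Hypothesis HPN : PN B.
Hypothesis HSB : starBase B.

Lemma notin_hull (i j h : T) : i < j -> [set i; j] \in B1 B -> h \notin supp (B1 B) ->
  ~~ (i <= h <= j).
Proof.
move=> lt ij hn; apply/negP => hh; move/negP: hn; apply.
exact: (hull_supp HPN HSB lt ij).
Qed.

Lemma sumW_B1_out (x : T) (X : {set T}) : X \in B1 B -> x \notin supp (B1 B) ->
  x \notin wrset X.
Proof.
move=> XB1 xn; have [p [q [p0 pq EX]]] := pairB HPN (subsetP (B1sub B) _ XB1); subst X.
move: (XB1); rewrite inB1 // => /andP [_ od].
by rewrite wrset2 // od (negPf (notin_hull pq XB1 xn)).
Qed.

Lemma sumW_free_card (x : T) : x \notin supp (B1 B) ->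
  [set X in B | x \in wrset X] = [set X in B0 B | x \in wrset X].
Proof.
move=> xn; apply/setP=> X; apply/setIdP/setIdP => [[XB xw]|[XB0 xw]]; split=> //.
- rewrite (B01 HPN XB); apply/negP => XB1.
  by move: xw; rewrite (negPf (sumW_B1_out XB1 xn)).
- exact: (subsetP (B0sub B)).
Qed.

Lemma pairY (i j : T) : i < j -> [set i; j] \in B1 B ->
  [set X in B | i \in wrset X] = [set X in B | j \in wrset X].
Proof.
move=> lt ij; have [i0 j0] := pair_pos HPN (subsetP (B1sub B) _ ij).
have odij : odd (j - i) by move: ij; rewrite inB1 // => /andP [].
apply/setP=> X; rewrite !memSetId; case XB: (X \in B) => //=.
have [p [q [p0 pq EX]]] := pairB HPN XB; subst X.
have [E|ne] := eqVneq [set p; q] [set i; j].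
  by rewrite E !wrset2 // odij /= !leqnn (ltnW lt).
have [n1 n2 n3 n4] := neq_pairs HPN XB (subsetP (B1sub B) _ ij) (ne : [set p; q] != [set i; j]).
rewrite !wrset2 //; case: ifP => od.
- have PQ : [set p; q] \in B1 B by rewrite inB1 // XB od.
  have c1 := noncross HPN HSB lt pq ij PQ.
  have c2 := noncross HPN HSB pq lt PQ ij.
  lia.
- have PQ : [set p; q] \in B0 B by rewrite inB0 // XB od.
  have hp := notin_hull lt ij (B0_notsupp1 HPN PQ (setU11 _ _)).
  have hq := notin_hull lt ij (B0_notsupp1 HPN PQ (setU1r _ (set11 _))).
  move: hp hq; rewrite i0 j0 /=; lia.
Qed.

Lemma free_between (l r : nat) (uu : T) : 1 <= l <= uu -> uu <= r -> r < N ->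
  cov0 B (itv N l uu.-1) -> cov0 B (itv N uu.+1 r) ->
  (forall h : T, h = l.-1 :> nat -> h \notin supp (B1 B)) ->
  (forall h : T, h = r.+1 :> nat -> h \notin supp (B1 B)) ->
  uu \notin supp (B1 B).
Proof.
move=> hl hr rN cL cR nL nR; apply/negP => /(supp_pair HPN) [p [q [pq PQ /orP [/eqP up|/eqP uq]]]].
- subst uu.
  case: (ltnP r q) => c.
    have := nR (inord r.+1) (ltac:(rewrite inordK; lia)).
    by rewrite (hull_supp HPN HSB pq PQ) // inordK; lia.
  have qR : q \in itv N p.+1 r by rewrite in_itv; lia.
  have [c0 [d [cd cdB /andP [h1 h2] sub]]] := cov_elem HPN cR qR.
  have hc : c0 \in itv N p.+1 r by apply: sub; rewrite leqnn (ltnW cd).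
  rewrite in_itv in hc.
  have [E|ne] := eqVneq [set c0; d] [set p; q].
    by have [e1 _] := set2_inj E cd pq; move: hc; rewrite e1; lia.
  have [n1 n2 n3 n4] := neq_pairs HPN (subsetP (B1sub B) _ cdB) (subsetP (B1sub B) _ PQ) ne.
  by apply: (noncross HPN HSB pq cd PQ cdB); lia.
- subst uu.
  case: (ltnP p l) => c.
    have := nL (inord l.-1) (ltac:(rewrite inordK; lia)).
    by rewrite (hull_supp HPN HSB pq PQ) // inordK; lia.
  have pL : p \in itv N l q.-1 by rewrite in_itv; lia.
  have [c0 [d [cd cdB /andP [h1 h2] sub]]] := cov_elem HPN cL pL.
  have hd : d \in itv N l q.-1 by apply: sub; rewrite leqnn (ltnW cd).
  rewrite in_itv in hd.
  have [E|ne] := eqVneq [set c0; d] [set p; q].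
    by have [_ e2] := set2_inj E cd pq; move: hd; rewrite e2; lia.
  have [n1 n2 n3 n4] := neq_pairs HPN (subsetP (B1sub B) _ cdB) (subsetP (B1sub B) _ PQ) ne.
  by apply: (noncross HPN HSB cd pq cdB PQ); lia.
Qed.

Lemma pair_count (i j : T) (K : pred T) : i < j -> odd (j - i) ->
  (K =1 (fun x : T => odd x)) \/ (K =1 (fun x : T => ~~ odd x)) ->
  #|[set x in [set i; j] | K x]| = 1.
Proof.
move=> lt od HK.
have ne : i != j by apply/eqP=> e; move: lt; rewrite e ltnn.
have [[Ki nKj]|[Kj nKi]] : (K i /\ ~~ K j) \/ (K j /\ ~~ K i).
  have pj : odd j = ~~ odd i by move: od lt; lia.
  by case: HK => HK; rewrite !HK pj; case: (odd i); [left|right|right|left].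
- have -> : [set x in [set i; j] | K x] = [set i].
    apply/setP=> x; rewrite !inE.
    case: (eqVneq x i) => [->|xi] /=; first by rewrite Ki.
    by case: (eqVneq x j) => [->|] //=; rewrite (negPf nKj).
  by rewrite cards1.
- have -> : [set x in [set i; j] | K x] = [set j].
    apply/setP=> x; rewrite !inE.
    case: (eqVneq x j) => [->|xj] /=; first by rewrite Kj orbT.
    by case: (eqVneq x i) => [->|] //=; rewrite (negPf nKi).
  by rewrite cards1.
Qed.

Lemma unbalanced (Y : {set T}) (x0 : T) :
  (forall i j : T, i < j -> [set i; j] \in B1 B -> (i \in Y) = (j \in Y)) ->
  x0 \in Y -> x0 \notin supp (B1 B) ->
  (forall x : T, x \in Y -> x \notin supp (B1 B) -> odd x = odd x0) ->
  #|[set x in Y | odd x]| != #|[set x in Y | ~~ odd x]|.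
Proof.
move=> HY x0Y x0S Hpar.
set S := supp (B1 B).
set P := [set X in B1 B | X \subset Y].
have tP : trivIset P.
  apply/trivIsetP => X Z /setIdP [XB _] /setIdP [ZB _] ne.
  exact: HPN.2 X Z (subsetP (B1sub B) _ XB) (subsetP (B1sub B) _ ZB) ne.
have bal : forall K : pred T, (K =1 (fun x : T => odd x)) \/ (K =1 (fun x : T => ~~ odd x)) ->
    #|[set x in Y | K x] :&: S| = #|P|.
  move=> K HK.
  have -> : [set x in Y | K x] :&: S = [set x in cover P | K x].
    apply/setP=> x; rewrite !inE; apply/idP/idP.
    - move=> /andP [/andP [xY Kx] xS]; rewrite Kx andbT.
      have [p [q [pq PQ hx]]] := supp_pair HPN xS.
      have [pY qY] : p \in Y /\ q \in Y.
        case/orP: hx => /eqP e; subst x.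
        - by split=> //; rewrite -(HY _ _ pq PQ).
        - by split=> //; rewrite (HY _ _ pq PQ).
      apply/bigcupP; exists [set p; q]; last by rewrite !inE.
      apply/setIdP; split=> //; apply/subsetP=> z /set2P [] ->; [exact: pY | exact: qY].
    - move=> /andP [/bigcupP [X /setIdP [XB /subsetP XY] xX] Kx].
      by rewrite (XY _ xX) Kx /=; apply/bigcupP; exists X.
  apply: cover_count => // X /setIdP [XB _].
  have [p [q [p0 pq EX]]] := pairB HPN (subsetP (B1sub B) _ XB); subst X.
  apply: pair_count => //; by move: XB; rewrite inB1 // => /andP [].
have bo := bal _ (or_introl (fun x => erefl)).
have be := bal _ (or_intror (fun x => erefl)).
rewrite -(cardsID S [set x in Y | odd x]) -(cardsID S [set x in Y | ~~ odd x]) bo be.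
rewrite eqn_add2l.
have E1 : forall b : bool, odd x0 = b -> [set x in Y | odd x != b] :\: S = set0.
  move=> b e; apply/setP=> x; rewrite !inE; apply/negP => /and3P [xS xY ob].
  by move: ob; rewrite (Hpar _ xY xS) e eqxx.
have N1 : forall b : bool, odd x0 = b -> 0 < #|[set x in Y | odd x == b] :\: S|.
  move=> b e; apply/card_gt0P; exists x0; by rewrite !inE x0S x0Y e eqxx.
case e: (odd x0).
- have := E1 _ e; have := N1 _ e.
  have -> : [set x in Y | odd x != true] = [set x in Y | ~~ odd x].
    by apply/setP=> x; rewrite !inE; case: (odd x).
  have -> : [set x in Y | odd x == true] = [set x in Y | odd x].
    by apply/setP=> x; rewrite !inE; case: (odd x).
  by move=> h ->; rewrite cards0; move: h; case: #|_|.
- have := E1 _ e; have := N1 _ e.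
  have -> : [set x in Y | odd x != false] = [set x in Y | odd x].
    by apply/setP=> x; rewrite !inE; case: (odd x).
  have -> : [set x in Y | odd x == false] = [set x in Y | ~~ odd x].
    by apply/setP=> x; rewrite !inE; case: (odd x).
  by move=> h ->; rewrite cards0; move: h; case: #|_|.
Qed.

End Gen.

Lemma setSD_mem (n : nat) (A C : {set 'I_n.+1}) x : (x \in Defs.setSD A C) = ((x \in A) != (x \in C)).
Proof. by rewrite !inE; case: (x \in A); case: (x \in C). Qed.

Section Big.
Variable N : nat.
Local Notation T := 'I_N.+1.
Hypothesis HNodd : odd N.
Variable B : {set {set T}}.
Hypothesis HPN : PN B.
Hypothesis HSB : starBase B.
Hypothesis HNs : ~~ inSupp B N.
Variables (f : nat -> T) (s : nat).
Hypothesis HsP : seqP B f s.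
Hypothesis Hs : odd s.

Let fn k := nat_of_ord (f k).
Let free x := (0 < x) && (x <= N) && ((inord x : T) \notin supp (B1 B)).

Lemma notN (h : T) : h \in supp B -> (h : nat) <> N.
Proof.
move=> hS e; move/negP: HNs; apply; apply/existsP; exists h; rewrite hS /=; apply/eqP; exact: e.
Qed.

Lemma supp1_sub (h : T) : h \in supp (B1 B) -> h \in supp B.
Proof. by move=> /bigcupP [X XB hX]; apply/bigcupP; exists X => //; apply: (subsetP (B1sub B)). Qed.

Lemma f_inB0 k : 1 <= k <= 2 * s -> exists2 X, X \in B0 B & f k \in X.
Proof.
move=> hk; have [_ [_ [_ [H _]]]] := HsP.
case: (leqP k s) => c.
- exists [set f (2 * s + 1 - k); f k]; last by rewrite !inE eqxx orbT.
  by apply/H; exists k; split=> //; lia.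
- exists [set f (2 * s + 1 - (2 * s + 1 - k)); f (2 * s + 1 - k)].
    by apply/H; exists (2 * s + 1 - k); split=> //; lia.
  have -> : 2 * s + 1 - (2 * s + 1 - k) = k by lia.
  by rewrite !inE eqxx.
Qed.

Lemma f_notS1 k : 1 <= k <= 2 * s -> f k \notin supp (B1 B).
Proof. by move=> hk; have [X XB fX] := f_inB0 hk; apply: (B0_notsupp1 HPN XB fX). Qed.

Lemma f_suppB k : 1 <= k <= 2 * s -> f k \in supp B.
Proof.
move=> hk; have [X XB fX] := f_inB0 hk; apply/bigcupP; exists X => //.
exact: (subsetP (B0sub B)).
Qed.

Lemma free_val (x : T) : free x = (0 < x) && (x \notin supp (B1 B)).
Proof. by rewrite /free inord_val leq_ord andbT. Qed.

Lemma cov_notfree a b h : cov0 B (itv N a b) -> 1 <= h -> a <= h <= b -> h <= N -> ~~ free h.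
Proof.
move=> c h1 hab hN; rewrite /free; apply/negP => /andP [_ hS]; move/negP: hS; apply.
apply: (cov_supp HPN HSB c); rewrite in_itv inordK; lia.
Qed.

Lemma Ffree k : 1 <= k <= 2 * s -> free (fn k).
Proof.
move=> hk; rewrite /fn free_val f_notS1 // andbT.
by have [_ [P _]] := HsP; apply: P.
Qed.

Lemma Finj j k : 1 <= j <= 2 * s -> 1 <= k <= 2 * s -> fn j = fn k -> j = k.
Proof. by move=> hj hk e; apply: (f_inj HPN HsP hj hk); apply: val_inj. Qed.

Lemma Fpair k : 1 <= k <= s -> fn k < fn (2 * s + 1 - k).
Proof. by move=> hk; have [_ [_ [P _]]] := HsP; have [] := P k hk. Qed.

Lemma FpairPar k : 1 <= k <= s -> odd (fn k) = odd (fn (2 * s + 1 - k)).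
Proof.
move=> hk; have [_ [_ [P _]]] := HsP; have [lt od] := P k hk.
rewrite /fn; move: lt od; lia.
Qed.

Lemma FN k : 1 <= k <= 2 * s -> fn k < N.
Proof.
move=> hk; have := notN (f_suppB hk); have := ltn_ord (f k); rewrite /fn; lia.
Qed.

Lemma Fgap k : (1 <= k < s) || (s + 1 <= k < 2 * s) ->
  forall h, fn k < h < fn k.+1 -> ~~ free h.
Proof.
move=> hk h hh; have [_ [_ [_ [_ [G1 G2]]]]] := HsP.
have c : cov0 B (itv N (f k).+1 (f k.+1).-1).
  by case/orP: hk => hk; [apply: G1 | apply: G2]; lia.
apply: (cov_notfree c); rewrite /fn in hh; try lia.
have := ltn_ord (f k.+1); lia.
Qed.

Lemma FgapPar k : (1 <= k < s) || (s + 1 <= k < 2 * s) ->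
  fn k < fn k.+1 -> odd (fn k.+1 - fn k).
Proof.
move=> hk lt; have [_ [_ [_ [_ [G1 G2]]]]] := HsP.
have c : cov0 B (itv N (f k).+1 (f k.+1).-1).
  by case/orP: hk => hk; [apply: G1 | apply: G2]; lia.
have := cov_even HPN HSB c (ltac:(lia)) (ltac:(have := ltn_ord (f k.+1); lia)).
rewrite /fn in lt *; lia.
Qed.

Lemma Ffree0 : ~~ free 0.
Proof. by []. Qed.

Lemma sumW_free (x : T) : 0 < x -> x \notin supp (B1 B) ->
  (x \in sumW B) = odd (cnt s fn x).
Proof.
move=> x0 xS; rewrite /sumW /sumSD in_set sumW_free_card // (card_B0_index HsP).
congr odd; apply: eq_in_count => k; rewrite mem_iota => hk.
have [lt od] : f k < f (2 * s + 1 - k) /\ ~~ odd (f (2 * s + 1 - k) - f k).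
  by have [_ [_ [P _]]] := HsP; apply: P; lia.
have [fk0 _] : 0 < f k /\ True by have [_ [P _]] := HsP; split=> //; apply: P; lia.
rewrite /= setUC wrset2 // (negPf od) x0 /= /fn orbC.
by [].
Qed.

Lemma ord0_notY (C : {set T}) : ord0 \notin C -> ord0 \notin Defs.setSD (sumW B) C.
Proof.
move=> c; rewrite setSD_mem (negPf c) /sumW /sumSD in_set.
have -> : [set X in B | ord0 \in wrset X] = set0.
  apply/setP=> X; rewrite memSetId in_set0; apply/negP => /andP [XB].
  have [p [q [p0 pq EX]]] := pairB HPN XB; subst X.
  rewrite wrset2 //=.
  by case: ifP => _ //; lia.
by rewrite cards0.
Qed.


Lemma s_pos : 1 <= s.
Proof. by move: Hs; lia. Qed.

Lemma Fpar (Hmono : forall k, 1 <= k < 2 * s -> fn k < fn k.+1) k :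
  1 <= k <= s -> ~~ odd (fn k + fn 1 + k + 1).
Proof.
elim: k => [|k IH] // /andP [k1 ks].
have [->|k0] := eqVneq k 0; first by lia.
have := IH (ltac:(lia)); have lt := Hmono k (ltac:(lia)).
have := FgapPar (ltac:(lia) : (1 <= k < s) || (s + 1 <= k < 2 * s)) lt; lia.
Qed.

Lemma Y_pair (C : {set T}) (i j : T) : i < j -> [set i; j] \in B1 B ->
  (i \in C) = (j \in C) ->
  (i \in Defs.setSD (sumW B) C) = (j \in Defs.setSD (sumW B) C).
Proof.
move=> lt ij eC; rewrite !setSD_mem eC; congr (_ != _).
by rewrite /sumW /sumSD !in_set (pairY HPN HSB lt ij).
Qed.

Section CII.
Hypothesis HcII : caseII B f s.
Variable u : nat.
Hypothesis Hu_rng : (f (2 * s)).+1 <= u <= N.-1.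
Hypothesis HcL : cov0 B (itv N (f (2 * s)).+1 u.-1).
Hypothesis HcR : cov0 B (itv N u.+1 N.-1).

Lemma N1 : 1 <= N. Proof. by move: HNodd; lia. Qed.

Lemma Hlow2 h : 1 <= h < fn 1 -> ~~ free h.
Proof.
move=> hh; apply: (cov_notfree HcII.1); rewrite /fn in hh; try lia.
have := ltn_ord (f 1); lia.
Qed.

Lemma Hf1_2 : odd (fn 1).
Proof.
have [_ [P _]] := HsP; have := P 1 (ltac:(have := s_pos; lia)).
have := cov_even HPN HSB HcII.1 (leqnn 1) (ltac:(have := ltn_ord (f 1); lia)).
rewrite /fn; lia.
Qed.

Lemma Hhigh2 h : fn (2 * s) < h < N -> h != u -> ~~ free h.
Proof.
move=> hh hu; case: (ltnP h u) => c.
- apply: (cov_notfree HcL); rewrite /fn in hh; lia.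
- apply: (cov_notfree HcR); rewrite /fn in hh; move/eqP: hu; lia.
Qed.

Lemma Hu_even : ~~ odd u.
Proof.
have := cov_even HPN HSB HcL (ltac:(lia)) (ltac:(lia)).
have := FpairPar (ltac:(have := s_pos; lia) : 1 <= 1 <= s).
have -> : 2 * s + 1 - 1 = 2 * s by lia.
have := Hf1_2; rewrite /fn; lia.
Qed.

Lemma Hmono2 k : 1 <= k < 2 * s -> fn k < fn k.+1.
Proof.
move=> hk.
apply: (mono2 (N := N) (u := u) (free := free) Hs Ffree0 Ffree Finj Fpair FpairPar FN Fgap FgapPar
   Hlow2 Hf1_2 Hhigh2 Hu_even _ hk).
rewrite /fn; lia.
Qed.

Lemma bigII : #|[set x in Defs.setSD (sumW B) (itv N u N) | odd x]| !=
  #|[set x in Defs.setSD (sumW B) (itv N u N) | ~~ odd x]|.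
Proof.
have s1 := s_pos.
have Hu2 : fn (2 * s) < u by rewrite /fn; lia.
have Hu3 : u < N by move: Hu_rng N1; lia.
have uS : (inord u : T) \notin supp (B1 B).
  have uv : (inord u : T) = u :> nat by rewrite inordK //; lia.
  have c1 : cov0 B (itv N (f (2 * s)).+1 (inord u : T).-1) by rewrite uv.
  have c2 : cov0 B (itv N (inord u : T).+1 N.-1) by rewrite uv.
  apply: (free_between HPN HSB _ _ _ c1 c2); rewrite ?uv; try lia.
  - move=> h e; have -> : h = f (2 * s) by apply: val_inj; rewrite /= e.
    by apply: f_notS1; lia.
  - move=> h e; apply/negP => /supp1_sub hS; have := notN hS; move: e N1; lia.
have f1S := f_notS1 (ltac:(lia) : 1 <= 1 <= 2 * s).
have f10 : 0 < f 1 by have [_ [P _]] := HsP; apply: P; lia.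
apply: (unbalanced HPN (x0 := f 1)).
- move=> i j lt ij; apply: Y_pair => //.
  have [i0 j0] := pair_pos HPN (subsetP (B1sub B) _ ij).
  have := notin_hull HPN HSB lt ij uS; rewrite !in_itv inordK; last lia.
  have := ltn_ord i; have := ltn_ord j; lia.
- rewrite setSD_mem sumW_free // in_itv.
  have := evalII1 (f := fn) Hs Hmono2 Hu2 Hu3.
  have := ltn_ord (f 1); rewrite /fn; case: (u <= f 1); case: (odd _); lia.
- exact: f1S.
- move=> x xY xS.
  have x0 : 0 < x.
    case: (posnP x) => // e; move: xY.
    have -> : x = ord0 by apply: val_inj.
    by rewrite (negPf (ord0_notY _)) // in_itv.
  move: xY; rewrite setSD_mem sumW_free // in_itv => Yx.
  apply: (evalII2 (N := N) (u := u) (free := free) Hs FpairPar Fgap Hmono2 (Fpar Hmono2) Hlow2 Hhigh2 Hu2 Hu3).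
  + by rewrite free_val x0.
  + by have := ltn_ord x; lia.
  + by move: Yx; rewrite x0 /=; case: (u <= x); case: (odd _); have := ltn_ord x; lia.
Qed.

End CII.


Lemma in_max (x : T) : (x \in [set ord_max]) = (x == N :> nat).
Proof. by rewrite inE -val_eqE. Qed.

Section CI.
Hypothesis HcI : caseI B f s.
Variable u : nat.
Hypothesis Hu_rng : 1 <= u <= (f 1).-1.
Hypothesis HcL : cov0 B (itv N 1 u.-1).
Hypothesis HcR : cov0 B (itv N u.+1 (f 1).-1).

Lemma Hlow1 h : 1 <= h < fn 1 -> h != u -> ~~ free h.
Proof.
move=> hh hu; have := ltn_ord (f 1); case: (ltnP h u) => c fN.
- apply: (cov_notfree HcL); rewrite /fn in hh; lia.
- apply: (cov_notfree HcR); rewrite /fn in hh; move/eqP: hu; lia.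
Qed.

Lemma Hu_odd : odd u.
Proof. by have := cov_even HPN HSB HcL (leqnn 1) (ltac:(have := ltn_ord (f 1); lia)); lia. Qed.

Lemma Hf2s_even : ~~ odd (fn (2 * s)).
Proof.
have fN := FN (ltac:(have := s_pos; lia) : 1 <= 2 * s <= 2 * s).
have := cov_even HPN HSB HcI.2 (ltac:(lia)) (ltac:(lia)).
move: fN HNodd; rewrite /fn; lia.
Qed.

Lemma Hhigh1 h : fn (2 * s) < h < N -> ~~ free h.
Proof. move=> hh; apply: (cov_notfree HcI.2); rewrite /fn in hh; lia. Qed.

Lemma Hu1' : u < fn 1.
Proof. by rewrite /fn; lia. Qed.

Lemma Hmono1 k : 1 <= k < 2 * s -> fn k < fn k.+1.
Proof.
move=> hk.
exact: (mono1 (N := N) (u := u) (free := free) Hs Ffree0 Ffree Finj Fpair FpairPar FN Fgap FgapPar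
   Hlow1 Hu1' Hu_odd Hf2s_even Hhigh1 hk).
Qed.

Lemma bigI : #|[set x in Defs.setSD (sumW B) (Defs.setSD [set ord_max] (itv N 1 u)) | odd x]| !=
  #|[set x in Defs.setSD (sumW B) (Defs.setSD [set ord_max] (itv N 1 u)) | ~~ odd x]|.
Proof.
have s1 := s_pos.
have HfN := FN (ltac:(lia) : 1 <= 2 * s <= 2 * s).
have f1N := FN (ltac:(lia) : 1 <= 1 <= 2 * s).
have uS : (inord u : T) \notin supp (B1 B).
  have uv : (inord u : T) = u :> nat by rewrite inordK //; rewrite /fn in f1N; lia.
  have c1 : cov0 B (itv N 1 (inord u : T).-1) by rewrite uv.
  have c2 : cov0 B (itv N (inord u : T).+1 (f 1).-1) by rewrite uv.
  apply: (free_between HPN HSB _ _ _ c1 c2); rewrite ?uv; rewrite /fn in f1N; try lia.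
  - move=> h e; have -> : h = ord0 by apply: val_inj; rewrite /= e.
    by apply: ord0_supp HPN _ (B1sub B).
  - move=> h e; have -> : h = f 1 by apply: val_inj; rewrite /= e; lia.
    by apply: f_notS1; lia.
have f1S := f_notS1 (ltac:(lia) : 1 <= 1 <= 2 * s).
have f10 : 0 < f 1 by have [_ [P _]] := HsP; apply: P; lia.
have uv : (inord u : T) = u :> nat by rewrite inordK //; rewrite /fn in f1N; lia.
apply: (unbalanced HPN (x0 := f 1)).
- move=> i j lt ij; apply: Y_pair => //.
  have [i0 j0] := pair_pos HPN (subsetP (B1sub B) _ ij).
  have iS : i \in supp B by apply/bigcupP; exists [set i; j]; rewrite ?(subsetP (B1sub B)) // !inE eqxx.
  have jS : j \in supp B by apply/bigcupP; exists [set i; j]; rewrite ?(subsetP (B1sub B)) // !inE eqxx ?orbT.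
  have := notN iS; have := notN jS.
  have := notin_hull HPN HSB lt ij uS; rewrite !setSD_mem !in_max !in_itv uv.
  have := ltn_ord i; have := ltn_ord j; lia.
- rewrite setSD_mem sumW_free // setSD_mem in_max in_itv.
  have := evalI1 (f := fn) Hs Hmono1 Hu1' (ltac:(lia)) HfN.
  rewrite /fn in f1N *.
  have e1 : (nat_of_ord (f 1) == N) = false by apply/eqP; lia.
  have e2 : (nat_of_ord (f 1) <= u) = false by apply/negbTE; rewrite -ltnNge; lia.
  by rewrite e1 e2 f10 /=.
- exact: f1S.
- move=> x xY xS.
  have x0 : 0 < x.
    case: (posnP x) => // e; move: xY.
    have -> : x = ord0 by apply: val_inj.
    rewrite (negPf (ord0_notY _)) // setSD_mem in_max in_itv /=.
    by have := HNodd; case: N.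
  move: xY; rewrite setSD_mem sumW_free // setSD_mem in_max in_itv => Yx.
  apply: (evalI2 (N := N) (u := u) (free := free) Hs FpairPar Fgap Hmono1 (Fpar Hmono1) Hlow1 Hhigh1 Hu1' (ltac:(lia)) HfN).
  + by rewrite free_val x0.
  + by have := ltn_ord x; lia.
  + by move: Yx; rewrite x0 /=.
Qed.

End CI.

End Big.

Section Final.
Variable N : nat.
Local Notation T := 'I_N.+1.
Hypothesis HNodd : odd N.

Lemma sumSD_cover (B C : {set {set T}}) : PN B -> C \subset B -> sumSD C id = cover C.
Proof.
move=> HPN CB; apply/setP=> x; rewrite /sumSD in_set.
case: (boolP (x \in cover C)) => [/bigcupP [X XC xX]|nx].
- have -> : [set Z in C | x \in id Z] = [set X].
    apply/setP=> Z; rewrite memSetId inE /=; apply/andP/eqP => [[ZC xZ]|->]; last by [].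
    exact: (disjB HPN (subsetP CB _ ZC) (subsetP CB _ XC) xZ xX).
  by rewrite cards1.
- have -> : [set Z in C | x \in id Z] = set0.
    apply/setP=> Z; rewrite memSetId inE /=; apply/negP => /andP [ZC xZ].
    by move/negP: nx; apply; apply/bigcupP; exists Z.
  by rewrite cards0.
Qed.

Lemma span_facts (B : {set {set T}}) (Y : {set T}) : PN B -> #|B0 B| = 0 -> inSpan B Y ->
  #|[set x in Y | odd x]| = #|[set x in Y | ~~ odd x]| /\ {subset Y <= supp B}.
Proof.
move=> HPN H0 [C [CB EY]].
rewrite EY (sumSD_cover HPN CB).
have B0e : B0 B = set0 by apply/eqP; rewrite -cards_eq0 H0.
have tC : trivIset C.
  apply/trivIsetP => X Z XC ZC ne.
  exact: HPN.2 X Z (subsetP CB _ XC) (subsetP CB _ ZC) ne.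
have pc : forall K : pred T, (K =1 (fun x : T => odd x)) \/ (K =1 (fun x : T => ~~ odd x)) ->
   #|[set x in cover C | K x]| = #|C|.
  move=> K HK; apply: cover_count => // X XC.
  have XB := subsetP CB _ XC.
  have [p [q [p0 pq EX]]] := pairB HPN XB; subst X.
  apply: pair_count => //.
  have : [set p; q] \notin B0 B by rewrite B0e inE.
  by rewrite inB0 // XB /= negbK.
split.
- by rewrite (pc _ (or_introl (fun x => erefl))) (pc _ (or_intror (fun x => erefl))).
- move=> x /bigcupP [X XC xX]; apply/bigcupP; exists X => //; exact: (subsetP CB).
Qed.

Lemma wr_max (B : {set {set T}}) (X : {set T}) : PN B -> X \in B ->
  (ord_max \in wrset X) = (X \in B0 B) || (ord_max \in X).
Proof.
move=> HPN XB; have [p [q [p0 pq EX]]] := pairB HPN XB; subst X.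
rewrite wrset2 // inB0 // XB /= !inE -!val_eqE /=.
have := ltn_ord q; case: ifP => od /=; lia.
Qed.

Lemma count_max (B : {set {set T}}) : PN B ->
  #|[set X in B | ord_max \in wrset X]| = #|B0 B| + #|[set X in B1 B | ord_max \in X]|.
Proof.
move=> HPN.
rewrite -(cardsID (B1 B) [set X in B | ord_max \in wrset X]) addnC.
have mA := memSetId B (fun X => ord_max \in wrset X).
congr (_ + _); apply: eq_card => X.
- rewrite in_setD mA.
  case XB: (X \in B) => /=; last first.
    rewrite andbF; apply/esym/negP => /(subsetP (B0sub B)); by rewrite XB.
  rewrite (wr_max HPN XB) (B01 HPN XB); by case: (X \in B1 B).
- rewrite in_setI mA (memSetId (B1 B) (fun X => ord_max \in X)).
  case XB1: (X \in B1 B); rewrite ?andbF //=.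
  have XB := subsetP (B1sub B) _ XB1.
  by rewrite XB (wr_max HPN XB) (B01 HPN XB) XB1 andbT.
Qed.


Lemma pair_max_lt (B : {set {set T}}) (i : T) : PN B -> [set i; ord_max] \in B -> i < (ord_max : T).
Proof.
move=> HPN Zin; have [c _] := HPN.1 _ Zin.
have := leq_ord i; rewrite leq_eqVlt => /orP [/eqP e|//].
have E : i = ord_max by apply: val_inj.
by move: c; rewrite E setUid cards1.
Qed.

Lemma Xminus_N (B : {set {set T}}) : Xminus B -> ord_max \in sumW B.
Proof.
move=> [[HPN _] [f [s [HsP [_ [Hev Hod]]]]]].
have Hs : #|B0 B| = s by have [] := HsP.
rewrite /sumW /sumSD in_set count_max // Hs.
case: (boolP (odd s)) => os.
- have [i [oi Zin]] := Hod os.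
  have lt := pair_max_lt HPN Zin.
  have Z0 : [set i; ord_max] \in B0 B by rewrite inB0 // Zin /=; move: oi HNodd lt => /=; lia.
  have -> : [set X in B1 B | ord_max \in X] = set0.
    apply/setP=> X; rewrite (memSetId (B1 B) (fun X => ord_max \in X)) in_set0; apply/negP => /andP [XB1 xm].
    have E := disjB HPN (subsetP (B1sub B) _ XB1) Zin xm (setU1r _ (set11 _)).
    by subst X; move: Z0; rewrite (B01 HPN Zin) XB1.
  by rewrite cards0 addn0.
- have [i [ei Zin]] := Hev os.
  have lt := pair_max_lt HPN Zin.
  have Z1 : [set i; ord_max] \in B1 B by rewrite inB1 // Zin /=; move: ei HNodd lt => /=; lia.
  have -> : [set X in B1 B | ord_max \in X] = [set [set i; ord_max]].
    apply/setP=> X; rewrite (memSetId (B1 B) (fun X => ord_max \in X)) in_set1; apply/andP/eqP => [[XB1 xm]|->].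
    + exact: (disjB HPN (subsetP (B1sub B) _ XB1) Zin xm (setU1r _ (set11 _))).
    + by rewrite Z1 !inE eqxx orbT.
  by rewrite cards1 addn1 /=; move: os; case: (odd s).
Qed.


Lemma Nm1_in (B : {set {set T}}) (h : T) : PN B -> #|B0 B| = 0 -> ~~ inSupp B N ->
  h \in supp B -> (h : nat) = N.-1 -> h \in sumW B.
Proof.
move=> HPN H0 HNs /bigcupP [X0 X0B hX0] hv.
have B0e : B0 B = set0 by apply/eqP; rewrite -cards_eq0 H0.
have inS : forall (X : {set T}) x, X \in B -> x \in X -> x \in supp B.
  by move=> X x XB xX; apply/bigcupP; exists X.
have key : forall X, X \in B -> (h \in wrset X) = (h \in X).
  move=> X XB; have [p [q [p0 pq EX]]] := pairB HPN XB; subst X.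
  have : [set p; q] \notin B0 B by rewrite B0e inE.
  rewrite inB0 // XB /= negbK => od.
  have qN := notN HNs (inS _ _ XB (setU1r _ (set11 q))).
  rewrite wrset2 // od !inE -!val_eqE /=.
  have := ltn_ord q; lia.
rewrite /sumW /sumSD in_set.
have -> : [set X in B | h \in wrset X] = [set X0].
  apply/setP=> X; rewrite (memSetId B (fun X => h \in wrset X)) in_set1.
  apply/andP/eqP => [[XB hX]|->]; last by rewrite X0B key.
  by rewrite key // in hX; apply: (disjB HPN XB X0B hX hX0).
by rewrite cards1.
Qed.


Lemma step (B0' B1' : {set {set T}}) (Y : {set T}) :
  inX B0' -> X0plus' B1' -> epsP B0' Y -> inSpan B1' Y -> X0plus' B0'.
Proof.
move=> HX [[[HPN1 HSB1] [f1 [s1 [HsP1 [HNs1 _]]]]] [H01 HNm1]] Heps Hspan.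
have [bal sub] := span_facts HPN1 H01 Hspan.
have maxY : ord_max \notin Y.
  apply/negP => /sub hS; move/negP: HNs1; apply; apply/existsP; exists ord_max.
  by rewrite hS eqxx.
have nm1Y : forall h : T, (h : nat) = N.-1 -> h \notin Y.
  move=> h hv; apply/negP => /sub hS; move/negP: HNm1; apply; apply/existsP; exists h.
  by rewrite hS /=; apply/eqP.
case: Heps => [[[HXm|[HXp H0]] EY]|[HXp [Hodd [u [HuB [He Ho]]]]]].
- by exfalso; move/negP: maxY; apply; rewrite EY Xminus_N.
- split=> //; split=> //.
  have [HSB [f [s [HsP [HNs _]]]]] := HXp; have HPN := HSB.1.
  apply/negP => /existsP [h /andP [hS /eqP hv]].
  by move/negP: (nm1Y h hv); apply; rewrite EY (Nm1_in HPN H0 HNs hS hv).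
- exfalso.
  have [HSB _] := HXp; have HPN := HSB.1.
  have [f [s [HsP [[HNs _] [_ Hcases]]]]] := HuB.
  have Hso : odd s by have [<- _] := HsP; exact: Hodd.
  case: Hcases => [[HcI [Hur [HcL HcR]]]|[HcII [Hur [HcL HcR]]]].
  + have uo := Hu_odd HNodd HPN HSB HNs Hso Hur HcL.
    have := bigI HNodd HPN HSB HNs HsP Hso HcI Hur HcL HcR.
    by rewrite -(Ho uo) bal eqxx.
  + have ue := Hu_even HNodd HPN HSB HNs HsP Hso HcII Hur HcL.
    have := bigII HNodd HPN HSB HNs HsP Hso HcII Hur HcL HcR.
    by rewrite -(He ue) bal eqxx.
Qed.

End Final.

Theorem mainTheorem9 (N : nat) (HNodd : odd N) (HN3 : 3 <= N)
  (B' B : {set {set 'I_N.+1}}) :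
  Xplus B' -> X0plus' B -> preceq B' B -> X0plus' B'.
Proof.
move=> _ HB P; elim: P HB => [C _ //|C0 C1 C2 HX0 HX1 [Y [He Hsp]] _ IH] HB.
exact: (step HNodd HX0 (IH HB) He Hsp).
Qed.
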